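(* Every countable equivalence structure is relatively $\Delta^0_3$ bi-embeddably categorical.
   Context: An equivalence structure $\mathcal{A}=(A,E)$ has universe $A\subseteq\omega$ and an equivalence relation $E$ on $A$; structures are identified with their atomic diagrams. Two structures are bi-embeddable if each embeds into the other. A countable structure $\mathcal{A}$ is relatively $\Delta^0_3$ bi-embeddably categorical if for every structure $\mathcal{B}$ bi-embeddable with $\mathcal{A}$ there are embeddings $\mathcal{A}\hookrightarrow\mathcal{B}$ and $\mathcal{B}\hookrightarrow\mathcal{A}$ that are $\Delta^0_3$ relative to $\mathcal{A}\oplus\mathcal{B}$ (i.e., computable in $(\mathcal{A}\oplus\mathcal{B})''$). *)

(* Defs.v *)
From Stdlib Require Import Arith.

Record EqStr := mkEqStr { dom : nat -> Prop; rel : nat -> nat -> Prop }.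

Definition is_equivalence_structure (S : EqStr) : Prop :=
  (forall x y, rel S x y -> dom S x /\ dom S y) /\
  (forall x, dom S x -> rel S x x) /\
  (forall x y, rel S x y -> rel S y x) /\
  (forall x y z, rel S x y -> rel S y z -> rel S x z).

Definition embedding (S T : EqStr) (f : nat -> nat) : Prop :=
  (forall x, dom S x -> dom T (f x)) /\
  (forall x y, dom S x -> dom S y -> f x = f y -> x = y) /\
  (forall x y, dom S x -> dom S y -> (rel S x y <-> rel T (f x) (f y))).

Definition bi_embeddable (S T : EqStr) : Prop :=
  (exists f, embedding S T f) /\ (exists g, embedding T S g).

Definition cpair (x y : nat) : nat := (x + y) * (x + y + 1) / 2 + y.

Definition diagram (S : EqStr) (n : nat) : Prop :=
  (exists x, n = 2 * x /\ dom S x) \/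
  (exists x y, n = 2 * cpair x y + 1 /\ rel S x y).

Definition join (X Y : nat -> Prop) (n : nat) : Prop :=
  (exists m, n = 2 * m /\ X m) \/ (exists m, n = 2 * m + 1 /\ Y m).

(* de Bruijn variables; environments are functions nat -> nat *)
Inductive term : Type :=
| tvar : nat -> term
| tzero : term
| tsucc : term -> term
| tadd : term -> term -> term
| tmul : term -> term -> term.

Inductive form : Type :=
| fEq : term -> term -> form
| fLt : term -> term -> form
| fIn : term -> form
| fNot : form -> form
| fAnd : form -> form -> form
| fOr : form -> form -> form
| fBall : term -> form -> form       (* forall v0 < t (t in outer env), phi *)
| fBex : term -> form -> form
| fAll : form -> form
| fEx : form -> form.

Definition scons (a : nat) (e : nat -> nat) : nat -> nat :=
  fun k => match k with 0 => a | S k' => e k' end.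

Fixpoint teval (e : nat -> nat) (t : term) : nat :=
  match t with
  | tvar k => e k
  | tzero => 0
  | tsucc t => S (teval e t)
  | tadd a b => teval e a + teval e b
  | tmul a b => teval e a * teval e b
  end.

Fixpoint sat (X : nat -> Prop) (e : nat -> nat) (f : form) : Prop :=
  match f with
  | fEq a b => teval e a = teval e b
  | fLt a b => teval e a < teval e b
  | fIn a => X (teval e a)
  | fNot g => ~ sat X e g
  | fAnd g h => sat X e g /\ sat X e h
  | fOr g h => sat X e g \/ sat X e h
  | fBall t g => forall z, z < teval e t -> sat X (scons z e) g
  | fBex t g => exists z, z < teval e t /\ sat X (scons z e) g
  | fAll g => forall z, sat X (scons z e) g
  | fEx g => exists z, sat X (scons z e) g
  end.

Fixpoint bounded (f : form) : Prop :=
  match f with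
  | fEq _ _ | fLt _ _ | fIn _ => True
  | fNot g => bounded g
  | fAnd g h | fOr g h => bounded g /\ bounded h
  | fBall _ g | fBex _ g => bounded g
  | fAll _ | fEx _ => False
  end.

Inductive isSigma : nat -> form -> Prop :=
| sig0 f : bounded f -> isSigma 0 f
| sigPi n f : isPi n f -> isSigma (S n) f
| sigEx n f : isSigma (S n) f -> isSigma (S n) (fEx f)
with isPi : nat -> form -> Prop :=
| pi0 f : bounded f -> isPi 0 f
| piSig n f : isSigma n f -> isPi (S n) f
| piAll n f : isPi (S n) f -> isPi (S n) (fAll f).

Definition env2 (x y : nat) : nat -> nat := scons x (scons y (fun _ => 0)).

Definition Sigma_rel (n : nat) (X : nat -> Prop) (R : nat -> nat -> Prop) : Prop :=
  exists f, isSigma n f /\ forall x y, R x y <-> sat X (env2 x y) f.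

(* A total function f : omega -> omega is Delta^0_n relative to X:
   its graph is both Sigma^0_n(X) and Pi^0_n(X). *)
Definition Delta_fun (n : nat) (X : nat -> Prop) (f : nat -> nat) : Prop :=
  Sigma_rel n X (fun x y => f x = y) /\ Sigma_rel n X (fun x y => f x <> y).

Definition rel_Delta3_biemb_categorical (S : EqStr) : Prop :=
  forall T : EqStr, is_equivalence_structure T -> bi_embeddable S T ->
    exists f g,
      embedding S T f /\ embedding T S g /\
      Delta_fun 3 (join (diagram S) (diagram T)) f /\
      Delta_fun 3 (join (diagram S) (diagram T)) g.

(* Main.v *)
Require Import Defs.
From Stdlib Require Import Arith Lia List ZArith Znumtheory Classical ClassicalEpsilon FunctionalExtensionality.
Import ListNotations.
Open Scope nat_scope.

Fixpoint tsubst (s : nat -> term) (t : term) : term :=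
  match t with
  | tvar k => s k
  | tzero => tzero
  | tsucc a => tsucc (tsubst s a)
  | tadd a b => tadd (tsubst s a) (tsubst s b)
  | tmul a b => tmul (tsubst s a) (tsubst s b)
  end.

Definition up (s : nat -> term) : nat -> term :=
  fun k => match k with 0 => tvar 0 | S k' => tsubst (fun i => tvar (S i)) (s k') end.

Fixpoint fsubst (s : nat -> term) (f : form) : form :=
  match f with
  | fEq a b => fEq (tsubst s a) (tsubst s b)
  | fLt a b => fLt (tsubst s a) (tsubst s b)
  | fIn a => fIn (tsubst s a)
  | fNot g => fNot (fsubst s g)
  | fAnd g h => fAnd (fsubst s g) (fsubst s h)
  | fOr g h => fOr (fsubst s g) (fsubst s h)
  | fBall t g => fBall (tsubst s t) (fsubst (up s) g)
  | fBex t g => fBex (tsubst s t) (fsubst (up s) g)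
  | fAll g => fAll (fsubst (up s) g)
  | fEx g => fEx (fsubst (up s) g)
  end.

Lemma teval_subst : forall t s e, teval e (tsubst s t) = teval (fun k => teval e (s k)) t.
Proof. induction t; intros; simpl; auto. Qed.

Lemma up_env : forall s e z,
  (fun k => teval (scons z e) (up s k)) = scons z (fun k => teval e (s k)).
Proof.
  intros. apply functional_extensionality. intros [|k]; simpl; auto.
  rewrite teval_subst. simpl. reflexivity.
Qed.

Section Sat.
Variable X : nat -> Prop.

Lemma sat_subst : forall f s e, sat X e (fsubst s f) <-> sat X (fun k => teval e (s k)) f.
Proof.
  induction f; intros; simpl; rewrite ?teval_subst.
  - tauto.
  - tauto.
  - tauto.
  - specialize (IHf s e); tauto.
  - specialize (IHf1 s e); specialize (IHf2 s e); tauto.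
  - specialize (IHf1 s e); specialize (IHf2 s e); tauto.
  - split; intros H z Hz; specialize (H z Hz); rewrite IHf, up_env in *; auto.
  - split; intros [z [Hz H]]; exists z; split; auto; rewrite IHf, up_env in *; auto.
  - split; intros H z; specialize (H z); rewrite IHf, up_env in *; auto.
  - split; intros [z H]; exists z; rewrite IHf, up_env in *; auto.
Qed.
End Sat.

Lemma bounded_subst : forall f s, bounded f -> bounded (fsubst s f).
Proof. induction f; simpl; intros; try destruct H; eauto. Qed.

Scheme isSigma_mut := Induction for isSigma Sort Prop
with isPi_mut := Induction for isPi Sort Prop.

Lemma class_subst : forall n f, isSigma n f -> forall s, isSigma n (fsubst s f).
Proof.
  apply (isSigma_mut (fun n f _ => forall s, isSigma n (fsubst s f))
                     (fun n f _ => forall s, isPi n (fsubst s f))); intros.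
  - constructor; apply bounded_subst; auto.
  - apply sigPi; auto.
  - simpl; apply sigEx; auto.
  - constructor; apply bounded_subst; auto.
  - apply piSig; auto.
  - simpl; apply piAll; auto.
Qed.

Lemma classP_subst : forall n f, isPi n f -> forall s, isPi n (fsubst s f).
Proof.
  apply (isPi_mut (fun n f _ => forall s, isSigma n (fsubst s f))
                     (fun n f _ => forall s, isPi n (fsubst s f))); intros.
  - constructor; apply bounded_subst; auto.
  - apply sigPi; auto.
  - simpl; apply sigEx; auto.
  - constructor; apply bounded_subst; auto.
  - apply piSig; auto.
  - simpl; apply piAll; auto.
Qed.

Lemma class_mono : forall n f, isSigma n f -> isSigma (S n) f.
Proof.
  apply (isSigma_mut (fun n f _ => isSigma (S n) f)
                     (fun n f _ => isPi (S n) f)); intros.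
  - apply sigPi; constructor; auto.
  - apply sigPi; auto.
  - apply sigEx; auto.
  - apply piSig; constructor; auto.
  - apply piSig; auto.
  - apply piAll; auto.
Qed.

Lemma classP_mono : forall n f, isPi n f -> isPi (S n) f.
Proof.
  apply (isPi_mut (fun n f _ => isSigma (S n) f)
                     (fun n f _ => isPi (S n) f)); intros.
  - apply sigPi; constructor; auto.
  - apply sigPi; auto.
  - apply sigEx; auto.
  - apply piSig; constructor; auto.
  - apply piSig; auto.
  - apply piAll; auto.
Qed.

Fixpoint fneg (f : form) : form :=
  match f with
  | fEx g => fAll (fneg g)
  | fAll g => fEx (fneg g)
  | _ => fNot f
  end.

Lemma sat_neg : forall X f e, sat X e (fneg f) <-> ~ sat X e f.
Proof.
  intros X f; induction f; intros; simpl; try tauto.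
  - split. intros [z Hz] H. apply (proj1 (IHf _) Hz); auto.
    intros H. apply NNPP. intros H'. apply H. intros z. apply NNPP. intros H2.
    apply H'. exists z. apply IHf. auto.
  - split; intros H. intros [z Hz]. apply (proj1 (IHf _) (H z)); auto.
    intros z. apply IHf. intros Hz. apply H. exists z; auto.
Qed.

Lemma class_neg : forall n f, isSigma n f -> isPi n (fneg f).
Proof.
  apply (isSigma_mut (fun n f _ => isPi n (fneg f))
                     (fun n f _ => isSigma n (fneg f))); intros; simpl.
  - destruct f; simpl in *; try contradiction; constructor; simpl; auto.
  - apply piSig; auto.
  - apply piAll; auto.
  - destruct f; simpl in *; try contradiction; constructor; simpl; auto.
  - apply sigPi; auto.
  - apply sigEx; auto.
Qed.

Lemma classP_neg : forall n f, isPi n f -> isSigma n (fneg f).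
Proof.
  apply (isPi_mut (fun n f _ => isPi n (fneg f))
                     (fun n f _ => isSigma n (fneg f))); intros; simpl.
  - destruct f; simpl in *; try contradiction; constructor; simpl; auto.
  - apply piSig; auto.
  - apply piAll; auto.
  - destruct f; simpl in *; try contradiction; constructor; simpl; auto.
  - apply sigPi; auto.
  - apply sigEx; auto.
Qed.

Lemma bounded_class : forall n f, bounded f -> isSigma n f /\ isPi n f.
Proof.
  induction n; intros. split; constructor; auto.
  destruct (IHn f H). split. apply sigPi; auto. apply piSig; auto.
Qed.

Lemma class0 : forall f, isSigma 0 f -> bounded f.
Proof. intros f H; inversion H; auto. Qed.
Lemma classP0 : forall f, isPi 0 f -> bounded f.
Proof. intros f H; inversion H; auto. Qed.
Definition env := nat -> nat.
Definition lft (t : term) : term := tsubst (fun k => tvar (S k)) t.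
Lemma teval_lft : forall t z e, teval (scons z e) (lft t) = teval e t.
Proof. intros. unfold lft. rewrite teval_subst. reflexivity. Qed.

Section Classes.
Variable X : nat -> Prop.

Definition Sg n (P : env -> Prop) := exists f, isSigma n f /\ forall e, P e <-> sat X e f.
Definition Pg n (P : env -> Prop) := exists f, isPi n f /\ forall e, P e <-> sat X e f.
Definition D0 (P : env -> Prop) := exists f, bounded f /\ forall e, P e <-> sat X e f.

Definition Ball (t : term) (P : env -> Prop) : env -> Prop :=
  fun e => forall z, z < teval e t -> P (scons z e).
Definition Ex (P : env -> Prop) : env -> Prop := fun e => exists z, P (scons z e).
Definition Bex (t : term) (P : env -> Prop) : env -> Prop :=
  fun e => exists z, z < teval e t /\ P (scons z e).

Lemma Sg_ext : forall n P Q, (forall e, P e <-> Q e) -> Sg n P -> Sg n Q.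
Proof. intros n P Q H [f [H1 H2]]. exists f; split; auto. intros e; rewrite <- H; auto. Qed.
Lemma Pg_ext : forall n P Q, (forall e, P e <-> Q e) -> Pg n P -> Pg n Q.
Proof. intros n P Q H [f [H1 H2]]. exists f; split; auto. intros e; rewrite <- H; auto. Qed.
Lemma D0_ext : forall P Q, (forall e, P e <-> Q e) -> D0 P -> D0 Q.
Proof. intros P Q H [f [H1 H2]]. exists f; split; auto. intros e; rewrite <- H; auto. Qed.

Lemma Sg_subst : forall n P s, Sg n P -> Sg n (fun e => P (fun k => teval e (s k))).
Proof. intros n P s [f [H1 H2]]. exists (fsubst s f); split. apply class_subst; auto.
  intros e. rewrite sat_subst. auto. Qed.
Lemma Pg_subst : forall n P s, Pg n P -> Pg n (fun e => P (fun k => teval e (s k))).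
Proof. intros n P s [f [H1 H2]]. exists (fsubst s f); split. apply classP_subst; auto.
  intros e. rewrite sat_subst. auto. Qed.
Lemma D0_subst : forall P s, D0 P -> D0 (fun e => P (fun k => teval e (s k))).
Proof. intros P s [f [H1 H2]]. exists (fsubst s f); split. apply bounded_subst; auto.
  intros e. rewrite sat_subst. auto. Qed.

Lemma D0_Sg : forall n P, D0 P -> Sg n P.
Proof. intros n P [f [H1 H2]]. exists f; split; auto. apply bounded_class; auto. Qed.
Lemma D0_Pg : forall n P, D0 P -> Pg n P.
Proof. intros n P [f [H1 H2]]. exists f; split; auto. apply bounded_class; auto. Qed.
Lemma Sg0_D0 : forall P, Sg 0 P -> D0 P.
Proof. intros P [f [H1 H2]]. exists f; split; auto. apply class0; auto. Qed.
Lemma Pg0_D0 : forall P, Pg 0 P -> D0 P.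
Proof. intros P [f [H1 H2]]. exists f; split; auto. apply classP0; auto. Qed.

Lemma Sg_mono : forall n P, Sg n P -> Sg (S n) P.
Proof. intros n P [f [H1 H2]]. exists f; split; auto. apply class_mono; auto. Qed.
Lemma Pg_mono : forall n P, Pg n P -> Pg (S n) P.
Proof. intros n P [f [H1 H2]]. exists f; split; auto. apply classP_mono; auto. Qed.
Lemma Sg_Pg : forall n P, Sg n P -> Pg (S n) P.
Proof. intros n P [f [H1 H2]]. exists f; split; auto. apply piSig; auto. Qed.
Lemma Pg_Sg : forall n P, Pg n P -> Sg (S n) P.
Proof. intros n P [f [H1 H2]]. exists f; split; auto. apply sigPi; auto. Qed.
Lemma Sg_le : forall n m P, n <= m -> Sg n P -> Sg m P.
Proof. intros n m P H; induction H; auto. intros; apply Sg_mono; auto. Qed.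
Lemma Pg_le : forall n m P, n <= m -> Pg n P -> Pg m P.
Proof. intros n m P H; induction H; auto. intros; apply Pg_mono; auto. Qed.

Lemma Sg_neg : forall n P, Sg n P -> Pg n (fun e => ~ P e).
Proof. intros n P [f [H1 H2]]. exists (fneg f); split. apply class_neg; auto.
  intros e. rewrite sat_neg, H2. tauto. Qed.
Lemma Pg_neg : forall n P, Pg n P -> Sg n (fun e => ~ P e).
Proof. intros n P [f [H1 H2]]. exists (fneg f); split. apply classP_neg; auto.
  intros e. rewrite sat_neg, H2. tauto. Qed.

Lemma Sg_ex : forall n P, Sg (S n) P -> Sg (S n) (Ex P).
Proof. intros n P [f [H1 H2]]. exists (fEx f); split. apply sigEx; auto.
  intros e; simpl. split; intros [z Hz]; exists z; apply H2; auto. Qed.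
Lemma Pg_all : forall n P, Pg (S n) P -> Pg (S n) (fun e => forall z, P (scons z e)).
Proof. intros n P [f [H1 H2]]. exists (fAll f); split. apply piAll; auto.
  intros e; simpl. split; intros H z; apply H2; auto. Qed.

Lemma D0_eq : forall a b, D0 (fun e => teval e a = teval e b).
Proof. intros. exists (fEq a b); simpl; split; tauto. Qed.
Lemma D0_lt : forall a b, D0 (fun e => teval e a < teval e b).
Proof. intros. exists (fLt a b); simpl; split; tauto. Qed.
Lemma D0_in : forall a, D0 (fun e => X (teval e a)).
Proof. intros. exists (fIn a); simpl; split; tauto. Qed.
Lemma D0_not : forall P, D0 P -> D0 (fun e => ~ P e).
Proof. intros P [f [H1 H2]]. exists (fNot f); simpl; split; auto. intros e; rewrite H2; tauto. Qed.
Lemma D0_and : forall P Q, D0 P -> D0 Q -> D0 (fun e => P e /\ Q e).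
Proof. intros P Q [f [H1 H2]] [g [H3 H4]]. exists (fAnd f g); simpl; split; auto.
  intros e; rewrite H2, H4; tauto. Qed.
Lemma D0_or : forall P Q, D0 P -> D0 Q -> D0 (fun e => P e \/ Q e).
Proof. intros P Q [f [H1 H2]] [g [H3 H4]]. exists (fOr f g); simpl; split; auto.
  intros e; rewrite H2, H4; tauto. Qed.
Lemma D0_ball : forall t P, D0 P -> D0 (Ball t P).
Proof. intros t P [f [H1 H2]]. exists (fBall t f); simpl; split; auto.
  intros e; unfold Ball; split; intros H z Hz; apply H2; auto. Qed.
Lemma D0_bex : forall t P, D0 P -> D0 (Bex t P).
Proof. intros t P [f [H1 H2]]. exists (fBex t f); simpl; split; auto.
  intros e; unfold Bex; split; intros [z [Hz H]]; exists z; split; auto; apply H2; auto. Qed.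
Lemma D0_False : D0 (fun _ => False).
Proof. apply D0_ext with (fun e => teval e tzero < teval e tzero). simpl; intros; lia. apply D0_lt. Qed.
Lemma D0_True : D0 (fun _ => True).
Proof. apply D0_ext with (fun e => teval e tzero = teval e tzero). simpl; intros; tauto. apply D0_eq. Qed.

Definition Good n :=
  (forall P Q, Sg n P -> Sg n Q -> Sg n (fun e => P e /\ Q e)) /\
  (forall P Q, Sg n P -> Sg n Q -> Sg n (fun e => P e \/ Q e)) /\
  (forall t P, Sg n P -> Sg n (Ball t P)) /\
  (forall t P, Sg n P -> Sg n (Bex t P)).

Lemma Pg_Sg_neg : forall n P, Sg n (fun e => ~ P e) -> Pg n P.
Proof. intros. apply Pg_ext with (fun e => ~ ~ P e). intros; split; [apply NNPP|tauto].
  apply Sg_neg; auto. Qed.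
Lemma Sg_Pg_neg : forall n P, Pg n (fun e => ~ P e) -> Sg n P.
Proof. intros. apply Sg_ext with (fun e => ~ ~ P e). intros; split; [apply NNPP|tauto].
  apply Pg_neg; auto. Qed.

Lemma Good_Pg : forall n, Good n ->
  (forall P Q, Pg n P -> Pg n Q -> Pg n (fun e => P e /\ Q e)) /\
  (forall P Q, Pg n P -> Pg n Q -> Pg n (fun e => P e \/ Q e)) /\
  (forall t P, Pg n P -> Pg n (Ball t P)) /\
  (forall t P, Pg n P -> Pg n (Bex t P)).
Proof.
  intros n [G1 [G2 [G3 G4]]]. repeat split; intros.
  - apply Pg_Sg_neg. apply Sg_ext with (fun e => ~ P e \/ ~ Q e). intros; tauto.
    apply G2; apply Pg_neg; auto.
  - apply Pg_Sg_neg. apply Sg_ext with (fun e => ~ P e /\ ~ Q e). intros; tauto.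
    apply G1; apply Pg_neg; auto.
  - apply Pg_Sg_neg. apply Sg_ext with (Bex t (fun e => ~ P e)).
    intros e; unfold Ball, Bex; split. intros [z [Hz H1]] H2. apply H1; auto.
    intros H1. apply NNPP; intros H2. apply H1. intros z Hz. apply NNPP. intros H3. apply H2. exists z; auto.
    apply G4; apply Pg_neg; auto.
  - apply Pg_Sg_neg. apply Sg_ext with (Ball t (fun e => ~ P e)).
    intros e; unfold Ball, Bex; split. intros H1 [z [Hz H2]]. apply (H1 z); auto.
    intros H1 z Hz H2. apply H1. exists z; auto.
    apply G3; apply Pg_neg; auto.
Qed.

Lemma Good0 : Good 0.
Proof.
  repeat split; intros; apply D0_Sg.
  - apply D0_and; apply Sg0_D0; auto.
  - apply D0_or; apply Sg0_D0; auto.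
  - apply D0_ball; apply Sg0_D0; auto.
  - apply D0_bex; apply Sg0_D0; auto.
Qed.

Lemma NF : forall n, Good n -> forall P, Sg (S n) P ->
  exists Q, Pg n Q /\ forall e, P e <-> exists z, Q (scons z e).
Proof.
  intros n G. destruct (Good_Pg n G) as [_ [_ [_ G4]]].
  assert (forall m f, isSigma m f -> m = S n ->
     exists Q, Pg n Q /\ forall e, sat X e f <-> exists z, Q (scons z e)).
  { intros m f H. induction H; intros Hm.
    - discriminate.
    - injection Hm; intros; subst.
      exists (fun e => sat X (fun k => e (S k)) f). split.
      + apply (Pg_subst n (fun e => sat X e f) (fun k => tvar (S k))).
        exists f; split; auto; tauto.
      + intros e. split. intros H1; exists 0; exact H1. intros [z Hz]; exact Hz.
    - destruct (IHisSigma Hm) as [Q [HQ HQe]].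
      exists (Bex (tvar 0) (Bex (tvar 1) (fun e => Q (scons (e 0) (scons (e 1) (fun k => e (S (S (S k))))))))).
      split.
      + apply G4. apply G4.
        apply Pg_ext with (fun e => Q (fun k => teval e
             (match k with 0 => tvar 0 | 1 => tvar 1 | S (S k) => tvar (S (S (S k))) end))).
        { intros e. replace (fun k => teval e
             (match k with 0 => tvar 0 | 1 => tvar 1 | S (S k) => tvar (S (S (S k))) end))
            with (scons (e 0) (scons (e 1) (fun k => e (S (S (S k)))))). tauto.
          apply functional_extensionality; intros [|[|k]]; reflexivity. }
        apply Pg_subst; auto.
      + intros e. simpl. unfold Bex. split.
        * intros [z Hz]. destruct (proj1 (HQe _) Hz) as [w Hw].
          exists (S (z + w)), z. split. simpl; lia.
          exists w. split. simpl; lia. simpl. exact Hw.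
        * intros [p [z [Hz [w [Hw H5]]]]]. exists z. apply (proj2 (HQe _)). exists w. exact H5. }
  intros P [f [H1 H2]]. destruct (H (S n) f H1 eq_refl) as [Q [HQ HQe]].
  exists Q; split; auto. intros e; rewrite H2; auto.
Qed.

Lemma collection : forall (R : nat -> nat -> Prop) t,
  (forall z, z < t -> exists w, R z w) -> exists W, forall z, z < t -> exists w, w < W /\ R z w.
Proof.
  intros R t; induction t; intros H.
  - exists 0; intros; lia.
  - destruct IHt as [W HW]. intros; apply H; lia.
    destruct (H t) as [w Hw]. lia.
    exists (S (W + w)). intros z Hz. destruct (Nat.eq_dec z t).
    + subst. exists w; split; auto; lia.
    + destruct (HW z) as [w' [H1 H2]]. lia. exists w'; split; auto; lia.
Qed.

Lemma Good_S : forall n, Good n -> Good (S n).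
Proof.
  intros n G. pose proof (Good_Pg n G) as [P1 [P2 [P3 P4]]].
  repeat split; intros.
  - destruct (NF n G P H) as [P' [HP' EP]]. destruct (NF n G Q H0) as [Q' [HQ' EQ]].
    apply Sg_ext with (Ex (Ex (fun e => P' (fun k => e (S k)) /\
         Q' (scons (e 0) (fun k => e (S (S k))))))).
    { intros e. rewrite EP, EQ. unfold Ex. simpl. split.
      intros [z [w [H1 H2]]]. split; [exists z|exists w]; auto.
      intros [[z H1] [w H2]]. exists z, w. split; auto. }
    apply Sg_ex. apply Sg_ex. apply Pg_Sg. apply P1.
    + apply (Pg_subst n P' (fun k => tvar (S k))); auto.
    + apply Pg_ext with (fun e => Q' (fun k => teval e (match k with 0 => tvar 0 | S k => tvar (S (S k)) end))).
      intros e. replace (fun k => teval e (match k with 0 => tvar 0 | S k => tvar (S (S k)) end))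
        with (scons (e 0) (fun k => e (S (S k)))). tauto.
      apply functional_extensionality; intros [|k]; reflexivity.
      apply Pg_subst; auto.
  - destruct (NF n G P H) as [P' [HP' EP]]. destruct (NF n G Q H0) as [Q' [HQ' EQ]].
    apply Sg_ext with (Ex (fun e => P' e \/ Q' e)).
    { intros e. rewrite EP, EQ. unfold Ex. simpl. split.
      intros [z [H1|H1]]; [left|right]; exists z; auto.
      intros [[z H1]|[z H1]]; exists z; auto. }
    apply Sg_ex. apply Pg_Sg. apply P2; auto.
  - destruct (NF n G P H) as [P' [HP' EP]].
    apply Sg_ext with (Ex (Ball (lft t) (Bex (tvar 1)
         (fun e => P' (scons (e 0) (scons (e 1) (fun k => e (S (S (S k)))))))))).
    { intros e. unfold Ex, Ball, Bex. simpl. split.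
      - intros [W HW] z Hz. apply EP. rewrite <- (teval_lft t W) in Hz.
        destruct (HW z Hz) as [w [_ H2]]. exists w. exact H2.
      - intros H1. destruct (collection (fun z w => P' (scons w (scons z e))) (teval e t)) as [W HW].
        intros z Hz. apply EP. apply H1; auto.
        exists W. intros z Hz. rewrite teval_lft in Hz. destruct (HW z Hz) as [w [H2 H3]].
        exists w. split; auto. }
    apply Sg_ex. apply Pg_Sg. apply P3. apply P4.
    apply Pg_ext with (fun e => P' (fun k => teval e
             (match k with 0 => tvar 0 | 1 => tvar 1 | S (S k) => tvar (S (S (S k))) end))).
    { intros e. replace (fun k => teval e
             (match k with 0 => tvar 0 | 1 => tvar 1 | S (S k) => tvar (S (S (S k))) end))
            with (scons (e 0) (scons (e 1) (fun k => e (S (S (S k)))))). tauto.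
      apply functional_extensionality; intros [|[|k]]; reflexivity. }
    apply Pg_subst; auto.
  - destruct (NF n G P H) as [P' [HP' EP]].
    apply Sg_ext with (Ex (Bex (lft t)
         (fun e => P' (scons (e 1) (scons (e 0) (fun k => e (S (S k)))))))).
    { intros e. unfold Ex, Bex. simpl. split.
      - intros [w [z [Hz H1]]]. rewrite teval_lft in Hz. exists z. split; auto.
        apply EP. exists w. exact H1.
      - intros [z [Hz H1]]. apply EP in H1. destruct H1 as [w Hw]. exists w, z.
        rewrite teval_lft. split; auto. }
    apply Sg_ex. apply Pg_Sg. apply P4.
    apply Pg_ext with (fun e => P' (fun k => teval e
             (match k with 0 => tvar 1 | 1 => tvar 0 | S (S k) => tvar (S (S k)) end))).
    { intros e. replace (fun k => teval e
             (match k with 0 => tvar 1 | 1 => tvar 0 | S (S k) => tvar (S (S k)) end))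
            with (scons (e 1) (scons (e 0) (fun k => e (S (S k))))). tauto.
      apply functional_extensionality; intros [|[|k]]; reflexivity. }
    apply Pg_subst; auto.
Qed.

Lemma Good_all : forall n, Good n.
Proof. induction n. apply Good0. apply Good_S; auto. Qed.

Lemma Sg_and : forall n P Q, Sg n P -> Sg n Q -> Sg n (fun e => P e /\ Q e).
Proof. intros n; apply (Good_all n). Qed.
Lemma Sg_or : forall n P Q, Sg n P -> Sg n Q -> Sg n (fun e => P e \/ Q e).
Proof. intros n; apply (Good_all n). Qed.
Lemma Sg_ball : forall n t P, Sg n P -> Sg n (Ball t P).
Proof. intros n; apply (Good_all n). Qed.
Lemma Sg_bex : forall n t P, Sg n P -> Sg n (Bex t P).
Proof. intros n; apply (Good_all n). Qed.
Lemma Pg_and : forall n P Q, Pg n P -> Pg n Q -> Pg n (fun e => P e /\ Q e).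
Proof. intros n; apply (Good_Pg n (Good_all n)). Qed.
Lemma Pg_or : forall n P Q, Pg n P -> Pg n Q -> Pg n (fun e => P e \/ Q e).
Proof. intros n; apply (Good_Pg n (Good_all n)). Qed.
Lemma Pg_ball : forall n t P, Pg n P -> Pg n (Ball t P).
Proof. intros n; apply (Good_Pg n (Good_all n)). Qed.
Lemma Pg_bex : forall n t P, Pg n P -> Pg n (Bex t P).
Proof. intros n; apply (Good_Pg n (Good_all n)). Qed.

End Classes.
Definition bt (c d i : nat) : nat := c mod (S (S i * d)).

Lemma crt2 : forall m1 m2 a1 a2 : Z, (0 < m1)%Z -> (0 < m2)%Z -> rel_prime m1 m2 ->
  exists x, (x mod m1 = a1 mod m1 /\ x mod m2 = a2 mod m2)%Z.
Proof.
  intros m1 m2 a1 a2 H1 H2 Hr. destruct (rel_prime_bezout _ _ Hr) as [u v Huv].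
  exists (a1 * v * m2 + a2 * u * m1)%Z. split.
  - replace (a1 * v * m2 + a2 * u * m1)%Z with (a1 + (u * (a2 - a1)) * m1 + a1 * (u * m1 + v * m2 - 1))%Z by ring.
    rewrite Huv. replace (a1 + u * (a2 - a1) * m1 + a1 * (1 - 1))%Z with (a1 + (u * (a2 - a1)) * m1)%Z by ring.
    apply Z.mod_add. lia.
  - replace (a1 * v * m2 + a2 * u * m1)%Z with (a2 + (v * (a1 - a2)) * m2 + a2 * (u * m1 + v * m2 - 1))%Z by ring.
    rewrite Huv. replace (a2 + v * (a1 - a2) * m2 + a2 * (1 - 1))%Z with (a2 + (v * (a1 - a2)) * m2)%Z by ring.
    apply Z.mod_add. lia.
Qed.

Lemma fact_div : forall m k, 0 < k <= m -> Nat.divide k (fact m).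
Proof.
  induction m; intros k Hk. lia.
  destruct (Nat.eq_dec k (S m)). subst. simpl fact. exists (fact m). nia.
  simpl fact. apply Nat.divide_add_r. apply IHm; lia. apply Nat.divide_mul_r. apply IHm; lia.
Qed.

Lemma fact_ge : forall m, m <= fact m.
Proof. induction m. simpl; lia. simpl fact. pose proof (lt_O_fact m). nia. Qed.

Lemma nat_Zdiv : forall a b, Nat.divide a b -> (Z.of_nat a | Z.of_nat b)%Z.
Proof. intros a b [q Hq]. exists (Z.of_nat q). subst. rewrite Nat2Z.inj_mul. reflexivity. Qed.

Section BetaZ.
Variable D : Z.
Definition uZ (i : nat) : Z := (1 + (Z.of_nat i + 1) * D)%Z.
Variable m : nat.
Hypothesis HD : D = Z.of_nat (fact m).

Lemma uZ_pos : forall i, (0 < uZ i)%Z.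
Proof. intros. unfold uZ. rewrite HD. lia. Qed.

Lemma uZ_coprime : forall i j, i < j -> j <= m -> rel_prime (uZ i) (uZ j).
Proof.
  intros i j Hij Hj. apply Zis_gcd_intro; try apply Z.divide_1_l.
  intros x Ha Hb.
  assert (H1 : (x | Z.of_nat (j - i))%Z).
  { replace (Z.of_nat (j - i)) with ((Z.of_nat j + 1) * uZ i - (Z.of_nat i + 1) * uZ j)%Z.
    apply Z.divide_sub_r; apply Z.divide_mul_r; auto. unfold uZ. rewrite Nat2Z.inj_sub by lia. ring. }
  assert (H2 : (x | D)%Z). { eapply Z.divide_trans. apply H1. rewrite HD. apply nat_Zdiv. apply fact_div. lia. }
  replace 1%Z with (uZ i - (Z.of_nat i + 1) * D)%Z by (unfold uZ; ring).
  apply Z.divide_sub_r; auto. apply Z.divide_mul_r; auto.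
Qed.

Fixpoint produ (k : nat) : Z := match k with 0 => 1%Z | S k => (produ k * uZ k)%Z end.

Lemma produ_pos : forall k, (0 < produ k)%Z.
Proof. induction k; simpl. lia. pose proof (uZ_pos k). nia. Qed.

Lemma produ_div : forall k i, i < k -> (uZ i | produ k)%Z.
Proof. induction k; intros i Hi. lia. simpl. destruct (Nat.eq_dec i k). subst. apply Z.divide_mul_r. apply Z.divide_refl.
  apply Z.divide_mul_l. apply IHk. lia. Qed.

Lemma produ_coprime0 : forall k j, k <= j -> j <= m -> rel_prime (produ k) (uZ j).
Proof.
  induction k; intros j Hkj Hj; simpl.
  - apply rel_prime_1.
  - apply rel_prime_sym. apply rel_prime_mult. apply rel_prime_sym. apply IHk; lia.
    apply rel_prime_sym. apply uZ_coprime; lia.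
Qed.
Lemma produ_coprime : forall k, k <= m -> rel_prime (produ k) (uZ k).
Proof. intros; apply produ_coprime0; lia. Qed.

Lemma crt_seq : forall (a : nat -> Z) k, k <= S m ->
  exists c, forall i, i < k -> (c mod uZ i = a i mod uZ i)%Z.
Proof.
  intros a; induction k; intros Hk.
  - exists 0%Z; intros; lia.
  - destruct IHk as [c Hc]. lia.
    destruct (crt2 (produ k) (uZ k) c (a k) (produ_pos k) (uZ_pos k) (produ_coprime k ltac:(lia))) as [x [Hx1 Hx2]].
    exists x. intros i Hi. destruct (Nat.eq_dec i k). subst; auto.
    rewrite (Zmod_div_mod (uZ i) (produ k) x (uZ_pos i) (produ_pos k) (produ_div k i ltac:(lia))).
    rewrite Hx1. rewrite <- (Zmod_div_mod (uZ i) (produ k) c (uZ_pos i) (produ_pos k) (produ_div k i ltac:(lia))).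
    apply Hc. lia.
Qed.
End BetaZ.

Lemma beta_exists : forall l : list nat, exists c d, forall i, i < length l -> bt c d i = nth i l 0.
Proof.
  intros l. set (m := length l + list_max l). set (D := Z.of_nat (fact m)).
  destruct (crt_seq D m eq_refl (fun i => Z.of_nat (nth i l 0)) (length l) ltac:(lia)) as [c Hc].
  set (P := produ D (length l)).
  assert (HP : (0 < P)%Z) by (apply (produ_pos D m eq_refl)).
  destruct (Z.mod_pos_bound c P HP) as [Hc1 Hc2].
  exists (Z.to_nat (c mod P)), (fact m). intros i Hi.
  assert (Hai : nth i l 0 <= list_max l).
  { pose proof (proj1 (list_max_le l (list_max l)) (le_n _)) as HF.
    rewrite Forall_forall in HF. apply HF. apply nth_In. auto. }
  pose proof (fact_ge m).
  apply Nat2Z.inj. unfold bt. rewrite Nat2Z.inj_mod. rewrite Z2Nat.id by lia.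
  assert (Hu : Z.of_nat (S (S i * fact m)) = uZ D i) by (unfold uZ, D; lia).
  rewrite Hu. rewrite <- Zmod_div_mod; [| apply (uZ_pos D m eq_refl) | auto | apply produ_div; auto].
  rewrite Hc by auto. apply Z.mod_small. split. lia. unfold uZ, D. 
  assert (nth i l 0 <= m). { unfold m. lia. } nia.
Qed.
Definition dec (P : Prop) : {P} + {~ P} := excluded_middle_informative P.

Fixpoint cnt (C : nat -> Prop) (w : nat) : nat :=
  match w with 0 => 0 | S w' => cnt C w' + (if dec (C w') then 1 else 0) end.

Lemma least_ex : forall (Q : nat -> Prop) n, Q n -> exists m, Q m /\ forall k, k < m -> ~ Q k.
Proof.
  intros Q n. induction n as [n IH] using (well_founded_induction lt_wf). intros Hn.
  destruct (classic (exists k, k < n /\ Q k)) as [[k [Hk1 Hk2]]|Hno].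
  - apply (IH k Hk1 Hk2).
  - exists n. split; auto. intros k Hk HQ. apply Hno. exists k; auto.
Qed.

Definition least (Q : nat -> Prop) : nat :=
  epsilon (inhabits 0) (fun m => Q m /\ forall k, k < m -> ~ Q k).

Lemma least_spec : forall Q n, Q n -> Q (least Q) /\ forall k, k < least Q -> ~ Q k.
Proof.
  intros Q n Hn. unfold least. apply epsilon_spec. apply (least_ex Q n Hn).
Qed.

Lemma least_unique : forall (Q : nat -> Prop) a b, Q a -> (forall k, k < a -> ~ Q k) ->
  Q b -> (forall k, k < b -> ~ Q k) -> a = b.
Proof.
  intros Q a b H1 H2 H3 H4. destruct (lt_eq_lt_dec a b) as [[H|H]|H]; auto.
  exfalso; apply (H4 a); auto. exfalso; apply (H2 b); auto.
Qed.

Lemma cnt_ext : forall C C', (forall z, C z <-> C' z) -> forall w, cnt C w = cnt C' w.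
Proof.
  intros C C' H w; induction w; simpl; auto.
  destruct (dec (C w)), (dec (C' w)); try (apply H in c; contradiction); try (apply H in c0; contradiction); lia.
Qed.

Lemma cnt_S_in : forall C w, C w -> cnt C (S w) = S (cnt C w).
Proof. intros; simpl. destruct (dec (C w)); [lia|contradiction]. Qed.
Lemma cnt_S_out : forall C w, ~ C w -> cnt C (S w) = cnt C w.
Proof. intros; simpl. destruct (dec (C w)); [contradiction|lia]. Qed.

Lemma cnt_mono : forall C w w', w <= w' -> cnt C w <= cnt C w'.
Proof. intros C w w' H; induction H; auto. simpl. lia. Qed.

Lemma cnt_lt : forall C y y', C y -> y < y' -> cnt C y < cnt C y'.
Proof. intros. pose proof (cnt_S_in C y H). pose proof (cnt_mono C (S y) y' H0). lia. Qed.

Lemma cnt_reach : forall C w n, n < cnt C w -> exists y, y < w /\ C y /\ cnt C y = n.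
Proof.
  intros C w; induction w; intros n Hn; simpl in Hn. lia.
  destruct (dec (C w)).
  - destruct (Nat.eq_dec n (cnt C w)). exists w; repeat split; auto.
    destruct (IHw n) as [y [H1 H2]]. lia. exists y; split; auto.
  - destruct (IHw n) as [y [H1 H2]]. lia. exists y; split; auto.
Qed.

Lemma cnt_zero : forall C w, (forall z, z < w -> ~ C z) -> cnt C w = 0.
Proof. intros C w; induction w; intros H; simpl; auto. rewrite IHw. destruct (dec (C w)). exfalso; apply (H w); auto. auto. intros; apply H; lia. Qed.

Definition flist (C : nat -> Prop) (w : nat) : list nat :=
  filter (fun z => if dec (C z) then true else false) (seq 0 w).

Lemma flist_len : forall C w, length (flist C w) = cnt C w.
Proof.
  intros C w; induction w; simpl; auto. unfold flist in *. rewrite seq_S, filter_app, length_app, IHw.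
  simpl. destruct (dec (C w)); simpl; lia.
Qed.

Lemma flist_in : forall C w z, In z (flist C w) <-> C z /\ z < w.
Proof.
  intros. unfold flist. rewrite filter_In, in_seq. destruct (dec (C z)); split; intros; try tauto; try lia.
  all: try (destruct H; try discriminate; try contradiction; split; auto; lia).
Qed.

Lemma flist_nodup : forall C w, NoDup (flist C w).
Proof. intros. apply NoDup_filter. apply seq_NoDup. Qed.

Lemma cnt_list : forall C W l, NoDup l -> (forall z, In z l -> C z /\ z < W) -> length l <= cnt C W.
Proof.
  intros. rewrite <- flist_len. apply NoDup_incl_length; auto. intros z Hz. apply flist_in; auto.
Qed.

Lemma NoDup_map_inj : forall (f : nat -> nat) l, (forall x y, In x l -> In y l -> f x = f y -> x = y) ->
  NoDup l -> NoDup (map f l).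
Proof.
  intros f l; induction l; intros Hi Hn; simpl; constructor.
  - intros H. apply in_map_iff in H. destruct H as [y [H1 H2]]. inversion Hn; subst.
    assert (y = a). apply Hi; simpl; auto. subst; contradiction.
  - inversion Hn; subst. apply IHl; auto. intros; apply Hi; simpl; auto.
Qed.

Definition lsum (l : list nat) := fold_right Nat.add 0 l.
Lemma lsum_ge : forall l x, In x l -> x <= lsum l.
Proof. induction l; simpl; intros x H. contradiction. destruct H. subst; lia. apply IHl in H; lia. Qed.

Section Eqv.
Variable E : nat -> nat -> Prop.
Hypothesis Esym : forall x y, E x y -> E y x.
Hypothesis Etrans : forall x y z, E x y -> E y z -> E x z.

Definition repE (r : nat) := E r r /\ forall z, z < r -> ~ E z r.
Definition rk (x : nat) := cnt (fun z => E z x) x.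
Definition HasRk (r n : nat) := exists y, E r y /\ rk y = n.
Definition IsRepOf (r x : nat) := E r x /\ forall z, z < r -> ~ E z x.

Lemma class_eq : forall x y, E x y -> forall z, E z x <-> E z y.
Proof. intros; split; intros; eauto. Qed.

Lemma rk_class : forall x y w, E x y -> cnt (fun z => E z x) w = cnt (fun z => E z y) w.
Proof. intros. apply cnt_ext. apply class_eq; auto. Qed.

Lemma rk_inj : forall x y, E x y -> rk x = rk y -> x = y.
Proof.
  intros x y Hxy Hr. unfold rk in Hr. destruct (lt_eq_lt_dec x y) as [[H|H]|H]; auto.
  - rewrite (rk_class x y x Hxy) in Hr. pose proof (cnt_lt (fun z => E z y) x y Hxy H). lia.
  - rewrite (rk_class x y x Hxy) in Hr. assert (E y y) by eauto.
    pose proof (cnt_lt (fun z => E z y) y x H0 H). lia.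
Qed.

Lemma rep_unique : forall r r', repE r -> repE r' -> E r r' -> r = r'.
Proof.
  intros r r' [H1 H2] [H3 H4] H. destruct (lt_eq_lt_dec r r') as [[Hl|Hl]|Hl]; auto.
  exfalso; apply (H4 r); auto. exfalso; apply (H2 r'); auto.
Qed.

Lemma IsRepOf_rep : forall r x, IsRepOf r x -> repE r.
Proof. intros r x [H1 H2]. split. eauto. intros z Hz Hzr. apply (H2 z Hz). eauto. Qed.

Lemma IsRepOf_ex : forall x, E x x -> exists r, IsRepOf r x.
Proof. intros x Hx. destruct (least_ex (fun z => E z x) x Hx) as [r [H1 H2]]. exists r; split; auto. Qed.

Lemma IsRepOf_unique : forall r r' x, IsRepOf r x -> IsRepOf r' x -> r = r'.
Proof. intros r r' x [H1 H2] [H3 H4]. apply (least_unique (fun z => E z x)); auto. Qed.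

Lemma IsRepOf_class : forall r x y, IsRepOf r x -> E x y -> IsRepOf r y.
Proof. intros r x y [H1 H2] H. split. eauto. intros z Hz Hzy. apply (H2 z Hz). eauto. Qed.

Lemma HasRk_down : forall r n k, HasRk r n -> k <= n -> HasRk r k.
Proof.
  intros r n k [y [Hy Hr]] Hk. unfold rk in Hr.
  assert (Hyy : E y y) by eauto.
  pose proof (cnt_S_in (fun z => E z y) y Hyy).
  destruct (cnt_reach (fun z => E z y) (S y) k) as [y' [H1 [H2 H3]]]. lia.
  exists y'. split. eauto. unfold rk. rewrite (rk_class y' y y'); auto.
Qed.

Lemma HasRk_rep0 : forall r, repE r -> HasRk r 0.
Proof. intros r [H1 H2]. exists r. split; auto. apply cnt_zero. auto. Qed.

Lemma HasRk_list : forall r n, HasRk r n -> exists l, NoDup l /\ length l = S n /\ forall z, In z l -> E r z.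
Proof.
  intros r n [y [Hy Hr]]. exists (flist (fun z => E z y) (S y)). repeat split.
  apply flist_nodup. rewrite flist_len. rewrite cnt_S_in. unfold rk in Hr; lia. eauto.
  intros z Hz. apply flist_in in Hz. destruct Hz. eauto.
Qed.

Lemma list_HasRk : forall r n l, E r r -> NoDup l -> length l = S n -> (forall z, In z l -> E r z) -> HasRk r n.
Proof.
  intros r n l Hr Hl Hlen Hin.
  assert (H : length l <= cnt (fun z => E z r) (S (lsum l))).
  { apply cnt_list; auto. intros z Hz. split. apply Esym; auto. pose proof (lsum_ge l z Hz). lia. }
  destruct (cnt_reach (fun z => E z r) (S (lsum l)) n) as [y [H1 [H2 H3]]]. lia.
  exists y. split. auto. unfold rk. rewrite (rk_class y r y); auto.
Qed.

End Eqv.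
Definition sub5 (a b c d g : term) : nat -> term :=
  fun k => match k with 0 => a | 1 => b | 2 => c | 3 => d | _ => g end.

Fixpoint tnum (k : nat) : term := match k with 0 => tzero | S k => tsucc (tnum k) end.
Lemma teval_tnum : forall e k, teval e (tnum k) = k.
Proof. induction k; simpl; auto. Qed.

Section Toolkit.
Variable X : nat -> Prop.

Lemma D0_t5 : forall (P : nat -> nat -> nat -> nat -> nat -> Prop) a b c d g,
  D0 X (fun e => P (e 0) (e 1) (e 2) (e 3) (e 4)) ->
  D0 X (fun e => P (teval e a) (teval e b) (teval e c) (teval e d) (teval e g)).
Proof. intros. apply (D0_subst X _ (sub5 a b c d g)) in H. eapply D0_ext; [|exact H]. intros; simpl; tauto. Qed.
Lemma Sg_t5 : forall n (P : nat -> nat -> nat -> nat -> nat -> Prop) a b c d g,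
  Sg X n (fun e => P (e 0) (e 1) (e 2) (e 3) (e 4)) ->
  Sg X n (fun e => P (teval e a) (teval e b) (teval e c) (teval e d) (teval e g)).
Proof. intros. apply (Sg_subst X _ _ (sub5 a b c d g)) in H. eapply Sg_ext; [|exact H]. intros; simpl; tauto. Qed.
Lemma Pg_t5 : forall n (P : nat -> nat -> nat -> nat -> nat -> Prop) a b c d g,
  Pg X n (fun e => P (e 0) (e 1) (e 2) (e 3) (e 4)) ->
  Pg X n (fun e => P (teval e a) (teval e b) (teval e c) (teval e d) (teval e g)).
Proof. intros. apply (Pg_subst X _ _ (sub5 a b c d g)) in H. eapply Pg_ext; [|exact H]. intros; simpl; tauto. Qed.

Lemma D0_t2 : forall (P : nat -> nat -> Prop) a b,
  D0 X (fun e => P (e 0) (e 1)) -> D0 X (fun e => P (teval e a) (teval e b)).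
Proof. intros. apply (D0_t5 (fun x y _ _ _ => P x y) a b tzero tzero tzero). auto. Qed.
Lemma Sg_t2 : forall n (P : nat -> nat -> Prop) a b,
  Sg X n (fun e => P (e 0) (e 1)) -> Sg X n (fun e => P (teval e a) (teval e b)).
Proof. intros. apply (Sg_t5 n (fun x y _ _ _ => P x y) a b tzero tzero tzero). auto. Qed.
Lemma Pg_t2 : forall n (P : nat -> nat -> Prop) a b,
  Pg X n (fun e => P (e 0) (e 1)) -> Pg X n (fun e => P (teval e a) (teval e b)).
Proof. intros. apply (Pg_t5 n (fun x y _ _ _ => P x y) a b tzero tzero tzero). auto. Qed.
Lemma D0_t1 : forall (P : nat -> Prop) a,
  D0 X (fun e => P (e 0)) -> D0 X (fun e => P (teval e a)).
Proof. intros. apply (D0_t5 (fun x _ _ _ _ => P x) a tzero tzero tzero tzero). auto. Qed.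
Lemma D0_t3 : forall (P : nat -> nat -> nat -> Prop) a b c,
  D0 X (fun e => P (e 0) (e 1) (e 2)) -> D0 X (fun e => P (teval e a) (teval e b) (teval e c)).
Proof. intros. apply (D0_t5 (fun x y z _ _ => P x y z) a b c tzero tzero). auto. Qed.
Lemma Sg_t3 : forall n (P : nat -> nat -> nat -> Prop) a b c,
  Sg X n (fun e => P (e 0) (e 1) (e 2)) -> Sg X n (fun e => P (teval e a) (teval e b) (teval e c)).
Proof. intros. apply (Sg_t5 n (fun x y z _ _ => P x y z) a b c tzero tzero). auto. Qed.
Lemma Pg_t3 : forall n (P : nat -> nat -> nat -> Prop) a b c,
  Pg X n (fun e => P (e 0) (e 1) (e 2)) -> Pg X n (fun e => P (teval e a) (teval e b) (teval e c)).
Proof. intros. apply (Pg_t5 n (fun x y z _ _ => P x y z) a b c tzero tzero). auto. Qed.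
Lemma D0_t4 : forall (P : nat -> nat -> nat -> nat -> Prop) a b c d,
  D0 X (fun e => P (e 0) (e 1) (e 2) (e 3)) -> D0 X (fun e => P (teval e a) (teval e b) (teval e c) (teval e d)).
Proof. intros. apply (D0_t5 (fun x y z w _ => P x y z w) a b c d tzero). auto. Qed.
Lemma Sg_t4 : forall n (P : nat -> nat -> nat -> nat -> Prop) a b c d,
  Sg X n (fun e => P (e 0) (e 1) (e 2) (e 3)) -> Sg X n (fun e => P (teval e a) (teval e b) (teval e c) (teval e d)).
Proof. intros. apply (Sg_t5 n (fun x y z w _ => P x y z w) a b c d tzero). auto. Qed.
Lemma Pg_t4 : forall n (P : nat -> nat -> nat -> nat -> Prop) a b c d,
  Pg X n (fun e => P (e 0) (e 1) (e 2) (e 3)) -> Pg X n (fun e => P (teval e a) (teval e b) (teval e c) (teval e d)).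
Proof. intros. apply (Pg_t5 n (fun x y z w _ => P x y z w) a b c d tzero). auto. Qed.

Lemma bt_char : forall c d i r, bt c d i = r <-> r < S (S i * d) /\ exists q, q < S c /\ c = q * S (S i * d) + r.
Proof.
  intros. unfold bt. split.
  - intros H. subst. split. apply Nat.mod_upper_bound; lia.
    exists (c / S (S i * d)). split.
    + assert (c / S (S i * d) <= c). apply Nat.div_le_upper_bound. lia. nia. lia.
    + pose proof (Nat.div_mod c (S (S i * d))). lia.
  - intros [H1 [q [H2 H3]]]. symmetry. apply (Nat.mod_unique c _ q r); auto. lia.
Qed.

Lemma bt_le : forall c d i, bt c d i <= c.
Proof. intros; unfold bt. apply Nat.mod_le. lia. Qed.

Lemma D0_bt : D0 X (fun e => bt (e 0) (e 1) (e 2) = e 3).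
Proof.
  apply D0_ext with (fun e => teval e (tvar 3) < teval e (tsucc (tmul (tsucc (tvar 2)) (tvar 1))) /\
     Bex (tsucc (tvar 0)) (fun e => teval e (tvar 1) = teval e (tadd (tmul (tvar 0) (tsucc (tmul (tsucc (tvar 3)) (tvar 2)))) (tvar 4))) e).
  - intros e. rewrite bt_char. unfold Bex. simpl. split; intros [H1 [q [H2 H3]]]; split; auto; exists q; split; auto.
  - apply D0_and. apply D0_lt. apply D0_bex. apply D0_eq.
Qed.

Lemma D0_letbt : forall P a b i, D0 X P ->
  D0 X (fun e => P (scons (bt (teval e a) (teval e b) (teval e i)) e)).
Proof.
  intros P a b i HP.
  apply D0_ext with (Bex (tsucc a) (fun e => bt (teval e (lft a)) (teval e (lft b)) (teval e (lft i)) = teval e (tvar 0) /\ P e)).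
  - intros e. unfold Bex. split.
    + intros [v [Hv [H1 H2]]]. rewrite !teval_lft in H1. simpl in H1. subst v. exact H2.
    + intros H. exists (bt (teval e a) (teval e b) (teval e i)). split. simpl. pose proof (bt_le (teval e a) (teval e b) (teval e i)). lia.
      rewrite !teval_lft. simpl. auto.
  - apply D0_bex. apply D0_and; auto. apply (D0_t4 (fun c d i r => bt c d i = r)). apply D0_bt.
Qed.

Lemma D0_In : forall l : list nat, D0 X (fun e => In (e 0) l).
Proof.
  induction l; simpl.
  - apply D0_False.
  - apply D0_or; auto.
    apply D0_ext with (fun e => teval e (tnum a) = teval e (tvar 0)).
    intros; rewrite teval_tnum; simpl; tauto. apply D0_eq.
Qed.

Lemma D0_In2 : forall l : list (nat * nat), D0 X (fun e => In (e 0, e 1) l).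
Proof.
  induction l; simpl.
  - apply D0_False.
  - apply D0_or; auto. destruct a as [a1 a2].
    apply D0_ext with (fun e => teval e (tnum a1) = teval e (tvar 0) /\ teval e (tnum a2) = teval e (tvar 1)).
    intros; rewrite !teval_tnum; simpl. split. intros [H1 H2]; subst; auto. intros H; inversion H; auto.
    apply D0_and; apply D0_eq.
Qed.

End Toolkit.
Definition RkCode (E : nat -> nat -> Prop) (c d x n : nat) : Prop :=
  bt c d 0 = 0 /\
  (forall i, i < x -> (E i x /\ bt c d (S i) = S (bt c d i)) \/ (~ E i x /\ bt c d (S i) = bt c d i)) /\
  bt c d x = n.

Lemma nth_map_cnt : forall C x i, i < S x -> nth i (map (cnt C) (seq 0 (S x))) 0 = cnt C i.
Proof.
  intros. change 0 with (cnt C 0) at 2. rewrite map_nth. rewrite seq_nth by auto. reflexivity.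
Qed.

Lemma rk_code : forall E x n, rk E x = n <-> exists c d, RkCode E c d x n.
Proof.
  intros E x n. split.
  - intros Hr. destruct (beta_exists (map (cnt (fun z => E z x)) (seq 0 (S x)))) as [c [d Hcd]].
    rewrite length_map, length_seq in Hcd.
    assert (Hb : forall i, i < S x -> bt c d i = cnt (fun z => E z x) i).
    { intros. rewrite Hcd by auto. apply nth_map_cnt; auto. }
    exists c, d. split; [|split].
    + rewrite Hb by lia. reflexivity.
    + intros i Hi. rewrite !Hb by lia. destruct (classic (E i x)).
      left. split; auto. apply cnt_S_in; auto. right. split; auto. apply cnt_S_out; auto.
    + rewrite Hb by lia. auto.
  - intros [c [d [H0 [H1 H2]]]].
    assert (forall i, i <= x -> bt c d i = cnt (fun z => E z x) i).
    { induction i; intros Hi. auto. destruct (H1 i) as [[Ha Hb]|[Ha Hb]]. lia.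
      rewrite Hb, IHi by lia. symmetry; apply cnt_S_in; auto.
      rewrite Hb, IHi by lia. symmetry; apply cnt_S_out; auto. }
    unfold rk. rewrite <- H by lia. auto.
Qed.

Definition Ex1 (P : env -> Prop) : env -> Prop := fun e => exists z, P (scons z e).
Definition All1 (P : env -> Prop) : env -> Prop := fun e => forall z, P (scons z e).

Section DefE.
Variable X : nat -> Prop.
Variable E : nat -> nat -> Prop.
Hypothesis DE : D0 X (fun e => E (e 0) (e 1)).

Lemma D0_E : forall a b, D0 X (fun e => E (teval e a) (teval e b)).
Proof. intros. apply (D0_t2 X E). auto. Qed.

Lemma D0_RkCode : D0 X (fun e => RkCode E (e 0) (e 1) (e 2) (e 3)).
Proof.
  unfold RkCode.
  apply D0_and; [|apply D0_and].
  - apply (D0_t4 X (fun c d i r => bt c d i = r) (tvar 0) (tvar 1) tzero tzero). apply D0_bt.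
  - apply D0_ext with (Ball (tvar 2) (fun e => (E (e 0) (e 3) /\
        (fun e => bt (e 2) (e 3) (S (e 1)) = S (e 0)) (scons (bt (teval e (tvar 1)) (teval e (tvar 2)) (teval e (tvar 0))) e)) \/
        (~ E (e 0) (e 3) /\
        (fun e => bt (e 2) (e 3) (S (e 1)) = e 0) (scons (bt (teval e (tvar 1)) (teval e (tvar 2)) (teval e (tvar 0))) e)))).
    + intros e. unfold Ball. simpl. tauto.
    + apply D0_ball. apply D0_or; apply D0_and.
      * apply (D0_E (tvar 0) (tvar 3)).
      * apply (D0_letbt X (fun e => bt (e 2) (e 3) (S (e 1)) = S (e 0))).
        apply (D0_t4 X (fun c d i r => bt c d i = r) (tvar 2) (tvar 3) (tsucc (tvar 1)) (tsucc (tvar 0))). apply D0_bt.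
      * apply D0_not. apply (D0_E (tvar 0) (tvar 3)).
      * apply (D0_letbt X (fun e => bt (e 2) (e 3) (S (e 1)) = e 0)).
        apply (D0_t4 X (fun c d i r => bt c d i = r) (tvar 2) (tvar 3) (tsucc (tvar 1)) (tvar 0)). apply D0_bt.
  - apply D0_bt.
Qed.

Lemma Sg_rk : Sg X 1 (fun e => rk E (e 0) = e 1).
Proof.
  apply Sg_ext with (Ex1 (Ex1 (fun e => RkCode E (e 1) (e 0) (e 2) (e 3)))).
  - intros e. unfold Ex1. simpl. rewrite rk_code. split; intros [c [d H]]; exists c, d; auto.
  - apply (Sg_ex X 0 (Ex1 (fun e => RkCode E (e 1) (e 0) (e 2) (e 3)))).
    apply (Sg_ex X 0 (fun e => RkCode E (e 1) (e 0) (e 2) (e 3))).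
    apply D0_Sg. apply (D0_t4 X (RkCode E) (tvar 1) (tvar 0) (tvar 2) (tvar 3)). apply D0_RkCode.
Qed.

Lemma Sg_HasRk : Sg X 1 (fun e => HasRk E (e 0) (e 1)).
Proof.
  apply Sg_ext with (Ex1 (fun e => E (e 1) (e 0) /\ rk E (e 0) = e 2)).
  - intros e. unfold Ex1, HasRk. simpl. tauto.
  - apply (Sg_ex X 0 (fun e => E (e 1) (e 0) /\ rk E (e 0) = e 2)). apply Sg_and.
    apply D0_Sg. apply (D0_E (tvar 1) (tvar 0)).
    apply (Sg_t2 X 1 (fun x n => rk E x = n) (tvar 0) (tvar 2)). apply Sg_rk.
Qed.

Lemma D0_rep : D0 X (fun e => repE E (e 0)).
Proof.
  apply D0_ext with (fun e => E (e 0) (e 0) /\ Ball (tvar 0) (fun e => ~ E (e 0) (e 1)) e).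
  - intros e. unfold repE, Ball. simpl. tauto.
  - apply D0_and. apply (D0_E (tvar 0) (tvar 0)). apply D0_ball. apply D0_not. apply (D0_E (tvar 0) (tvar 1)).
Qed.

Lemma D0_IsRepOf : D0 X (fun e => IsRepOf E (e 0) (e 1)).
Proof.
  apply D0_ext with (fun e => E (e 0) (e 1) /\ Ball (tvar 0) (fun e => ~ E (e 0) (e 2)) e).
  - intros e. unfold IsRepOf, Ball. simpl. tauto.
  - apply D0_and. apply (D0_E (tvar 0) (tvar 1)). apply D0_ball. apply D0_not. apply (D0_E (tvar 0) (tvar 2)).
Qed.
End DefE.

Definition DomR (EA EB : nat -> nat -> Prop) (r d : nat) : Prop :=
  forall n, HasRk EA r n -> HasRk EB d n.

Lemma Pg_Dom : forall X EA EB, D0 X (fun e => EA (e 0) (e 1)) -> D0 X (fun e => EB (e 0) (e 1)) ->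
  Pg X 2 (fun e => DomR EA EB (e 0) (e 1)).
Proof.
  intros X EA EB DA DB.
  apply Pg_ext with (All1 (fun e => ~ HasRk EA (e 1) (e 0) \/ HasRk EB (e 2) (e 0))).
  - intros e. unfold All1, DomR. simpl. split; intros H n; specialize (H n); [intros; destruct H; tauto | tauto].
  - apply (Pg_all X 1 (fun e => ~ HasRk EA (e 1) (e 0) \/ HasRk EB (e 2) (e 0))). apply Pg_or.
    + apply Pg_mono. apply (Sg_neg X 1 (fun e => HasRk EA (e 1) (e 0))).
      apply (Sg_t2 X 1 (HasRk EA) (tvar 1) (tvar 0)). apply Sg_HasRk; auto.
    + apply Sg_Pg. apply (Sg_t2 X 1 (HasRk EB) (tvar 2) (tvar 0)). apply Sg_HasRk; auto.
Qed.
Section Rare.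
Variables EA EB : nat -> nat -> Prop.
Hypothesis symA : forall x y, EA x y -> EA y x.
Hypothesis transA : forall x y z, EA x y -> EA y z -> EA x z.
Hypothesis symB : forall x y, EB x y -> EB y x.
Hypothesis transB : forall x y z, EB x y -> EB y z -> EB x z.
Variable h : nat -> nat.
Hypothesis hdom : forall x, EA x x -> EB (h x) (h x).
Hypothesis hinj : forall x y, EA x x -> EA y y -> h x = h y -> x = y.
Hypothesis hrel : forall x y, EA x x -> EA y y -> (EA x y <-> EB (h x) (h y)).

Definition rhoB (y : nat) := least (fun z => EB z y).

Lemma rhoB_spec : forall y, EB y y -> IsRepOf EB (rhoB y) y.
Proof. intros y Hy. destruct (least_spec (fun z => EB z y) y Hy). split; auto. Qed.

Definition g0 (r : nat) := rhoB (h r).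

Lemma g0_rep : forall r, repE EA r -> repE EB (g0 r).
Proof. intros r [Hr _]. eapply IsRepOf_rep; eauto. apply rhoB_spec. auto. Qed.

Lemma g0_inj : forall r r', repE EA r -> repE EA r' -> g0 r = g0 r' -> r = r'.
Proof.
  intros r r' H1 H2 H. destruct H1 as [H1 H1'], H2 as [H2 H2'].
  destruct (rhoB_spec (h r) (hdom r H1)) as [Ha _]. destruct (rhoB_spec (h r') (hdom r' H2)) as [Hb _].
  unfold g0 in H. rewrite H in Ha.
  assert (EA r r'). apply hrel; eauto.
  eapply rep_unique with (E := EA); eauto; split; auto.
Qed.

Lemma g0_dom : forall r, repE EA r -> DomR EA EB r (g0 r).
Proof.
  intros r Hr n Hn. destruct Hr as [Hr Hr'].
  destruct (HasRk_list EA symA transA r n Hn) as [l [Hl1 [Hl2 Hl3]]].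
  destruct (rhoB_spec (h r) (hdom r Hr)) as [Hg _].
  apply (list_HasRk EB symB transB (g0 r) n (map h l)).
  - eauto.
  - apply NoDup_map_inj; auto. intros x y Hx Hy Hxy. apply hinj; auto.
    apply Hl3 in Hx; eauto. apply Hl3 in Hy; eauto.
  - rewrite length_map; auto.
  - intros z Hz. apply in_map_iff in Hz. destruct Hz as [x [Hx1 Hx2]]. subst.
    apply Hl3 in Hx2. eapply transB. apply Hg. apply hrel; eauto.
Qed.

Definition rare (r : nat) := exists b, forall d, b < d -> repE EB d -> ~ DomR EA EB r d.

Lemma rare_finite : exists M, forall r, repE EA r -> rare r -> r < M.
Proof.
  apply NNPP. intros Hno.
  assert (Hinf : forall M, exists r, M <= r /\ repE EA r /\ rare r).
  { intros M. apply NNPP. intros H. apply Hno. exists M. intros r H1 H2.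
    apply NNPP. intros H3. apply H. exists r. split; [lia|split; auto]. }
  assert (Hlist : forall k, exists L, NoDup L /\ length L = k /\ forall r, In r L -> repE EA r /\ rare r).
  { induction k. exists nil. split; [constructor|split; [reflexivity|intros x []]].
    destruct IHk as [L [H1 [H2 H3]]]. destruct (Hinf (S (lsum L))) as [r0 [Hr1 [Hr2 Hr3]]].
    exists (r0 :: L). split; [|split].
    - constructor; auto. intros HI. pose proof (lsum_ge L r0 HI). lia.
    - simpl; auto.
    - intros x [Hx|Hx]; subst; auto. }
  assert (Step : forall r, repE EA r -> rare r -> exists r1 m, repE EA r1 /\ rare r1 /\ HasRk EA r m /\ ~ HasRk EA r1 m).
  { intros r Hr [b Hb]. destruct (Hlist (S (S b))) as [L [H1 [H2 H3]]].
    destruct (classic (exists r1, In r1 L /\ b < g0 r1)) as [[r1 [Hr1 Hb1]]|Hn].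
    - destruct (H3 r1 Hr1) as [Hr1a Hr1b].
      pose proof (Hb (g0 r1) Hb1 (g0_rep r1 Hr1a)) as Hnd.
      unfold DomR in Hnd. apply not_all_ex_not in Hnd. destruct Hnd as [m Hm].
      exists r1, m. split; [auto|split; [auto|split]].
      + apply NNPP. intros Hc. apply Hm. intros Hc2. contradiction.
      + intros Hr1m. apply Hm. intros _. apply (g0_dom r1 Hr1a m Hr1m).
    - exfalso.
      assert (length (map g0 L) <= length (seq 0 (S b))).
      { apply NoDup_incl_length. apply NoDup_map_inj; auto.
        intros x y Hx Hy. apply g0_inj. apply H3; auto. apply H3; auto.
        intros z Hz. apply in_map_iff in Hz. destruct Hz as [x [Hx1 Hx2]]. subst.
        apply in_seq. split. lia. apply NNPP. intros Hc. apply Hn. exists x. split; auto. lia. }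
      rewrite length_map, length_seq in H. lia. }
  assert (Desc : forall n r, repE EA r -> rare r -> ~ HasRk EA r n -> False).
  { induction n; intros r Hr Hra Hh.
    - apply Hh. apply HasRk_rep0; auto.
    - destruct (Step r Hr Hra) as [r1 [m [H1 [H2 [H3 H4]]]]].
      assert (m <= n). { destruct (le_lt_dec m n); auto. exfalso. apply Hh. apply HasRk_down with m; auto. }
      apply (IHn r1); auto. intros H5. apply H4. apply HasRk_down with n; auto. }
  destruct (Hinf 0) as [r0 [_ [H1 H2]]].
  destruct (Step r0 H1 H2) as [r1 [m [H3 [H4 [H5 H6]]]]].
  apply (Desc m r1); auto.
Qed.

Lemma specials_exist : exists (RA : list nat) (g : nat -> nat),
  (forall r, In r RA -> repE EA r /\ repE EB (g r) /\ DomR EA EB r (g r)) /\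
  (forall r r', In r RA -> In r' RA -> g r = g r' -> r = r') /\
  (forall r, repE EA r -> ~ In r RA -> forall b, exists d, b < d /\ repE EB d /\ DomR EA EB r d).
Proof.
  destruct rare_finite as [M HM].
  exists (flist (fun r => repE EA r /\ rare r) M), g0. split; [|split].
  - intros r H. apply flist_in in H. split; [tauto|split].
    apply g0_rep; tauto. apply g0_dom; tauto.
  - intros r r' H1 H2. apply flist_in in H1. apply flist_in in H2. apply g0_inj; tauto.
  - intros r Hr Hn b. assert (~ rare r). { intros Hra. apply Hn. apply flist_in. split; auto. }
    apply NNPP. intros Hc. apply H. exists b. intros d Hd1 Hd2 Hd3. apply Hc. exists d; auto.
Qed.
End Rare.
Section Tau.
Variables EA EB : nat -> nat -> Prop.
Variable RA : list nat.
Variable g : nat -> nat.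
Hypothesis HRA3 : forall r, repE EA r -> ~ In r RA -> forall b, exists d, b < d /\ repE EB d /\ DomR EA EB r d.

Definition NSA (r : nat) := repE EA r /\ ~ In r RA.
Definition NSB (d : nat) := repE EB d /\ ~ In d (map g RA).
Definition ElgR (t : nat -> nat) (r d : nat) :=
  NSB d /\ DomR EA EB r d /\ forall r', r' < r -> NSA r' -> t r' <> d.

Lemma ElgR_ext : forall t t' r d, (forall r', r' < r -> t r' = t' r') -> (ElgR t r d <-> ElgR t' r d).
Proof.
  intros t t' r d H. unfold ElgR. split; intros [H1 [H2 H3]]; split; auto; split; auto;
  intros r' Hr' Hn; [rewrite <- H|rewrite H]; auto.
Qed.

Definition step (l : list nat) (r : nat) : nat :=
  if dec (NSA r) then least (ElgR (fun i => nth i l 0) r) else 0.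
Fixpoint tl (n : nat) : list nat := match n with 0 => nil | S n => tl n ++ [step (tl n) n] end.
Definition tau (r : nat) : nat := nth r (tl (S r)) 0.

Lemma tl_len : forall n, length (tl n) = n.
Proof. induction n; simpl; auto. rewrite length_app, IHn; simpl; lia. Qed.

Lemma tau_eq : forall r, tau r = step (tl r) r.
Proof. intros. unfold tau. simpl. rewrite app_nth2; rewrite tl_len; auto. rewrite Nat.sub_diag. reflexivity. Qed.

Lemma tl_prefix : forall n i, i < n -> nth i (tl n) 0 = tau i.
Proof.
  induction n; intros i Hi. lia. simpl. destruct (Nat.eq_dec i n).
  - subst. rewrite app_nth2; rewrite tl_len; auto. rewrite Nat.sub_diag. simpl. symmetry; apply tau_eq.
  - rewrite app_nth1. apply IHn; lia. rewrite tl_len; lia.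
Qed.

Lemma tau_spec : forall r,
  (NSA r -> ElgR tau r (tau r) /\ forall d, d < tau r -> ~ ElgR tau r d) /\ (~ NSA r -> tau r = 0).
Proof.
  intros r. rewrite tau_eq. unfold step. split; intros Hn.
  - destruct (dec (NSA r)); [|contradiction].
    assert (HE : forall d, ElgR (fun i => nth i (tl r) 0) r d <-> ElgR tau r d).
    { intros. apply ElgR_ext. intros. apply tl_prefix; auto. }
    destruct Hn as [Hr HnI].
    destruct (HRA3 r Hr HnI (lsum (map g RA) + lsum (map tau (seq 0 r)))) as [d [Hd1 [Hd2 Hd3]]].
    assert (Hel : ElgR tau r d).
    { split; [split|split]; auto.
      - intros HI. pose proof (lsum_ge _ _ HI). lia.
      - intros r' Hr' _ Heq. assert (In (tau r') (map tau (seq 0 r))). apply in_map. apply in_seq. lia.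
        pose proof (lsum_ge _ _ H). lia. }
    apply HE in Hel. destruct (least_spec _ _ Hel) as [H1 H2]. split.
    + apply HE; auto.
    + intros d' Hd'. rewrite <- HE. apply H2; auto.
  - destruct (dec (NSA r)); [contradiction|auto].
Qed.

Definition Corr (c k R : nat) : Prop :=
  forall j, j < S R ->
    (NSA j /\ ElgR (bt c k) j (bt c k j) /\ forall d, d < bt c k j -> ~ ElgR (bt c k) j d) \/
    (~ NSA j /\ bt c k j = 0).

Lemma corr_sound : forall c k R, Corr c k R -> forall j, j <= R -> bt c k j = tau j.
Proof.
  intros c k R HC j. induction j as [j IH] using (well_founded_induction lt_wf). intros Hj.
  assert (HE : forall d, ElgR (bt c k) j d <-> ElgR tau j d). { intros; apply ElgR_ext. intros; apply IH; lia. }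
  destruct (HC j ltac:(lia)) as [[H1 [H2 H3]]|[H1 H2]].
  - destruct (proj1 (tau_spec j) H1) as [H4 H5].
    apply (least_unique (ElgR tau j)); auto. apply HE; auto. intros d Hd. rewrite <- HE. auto.
  - rewrite H2. symmetry. apply (proj2 (tau_spec j) H1).
Qed.

Lemma corr_complete : forall R, exists c k, Corr c k R /\ bt c k R = tau R.
Proof.
  intros R. destruct (beta_exists (map tau (seq 0 (S R)))) as [c [k Hck]].
  rewrite length_map, length_seq in Hck.
  assert (Hb : forall i, i < S R -> bt c k i = tau i).
  { intros. rewrite Hck by auto. rewrite nth_indep with (d' := tau 0) by (rewrite length_map, length_seq; auto).
    rewrite map_nth. rewrite seq_nth by auto. reflexivity. }
  exists c, k. split; [|apply Hb; lia].
  intros j Hj. destruct (classic (NSA j)) as [Hn|Hn].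
  - left. destruct (proj1 (tau_spec j) Hn) as [H1 H2].
    assert (HE : forall d, ElgR (bt c k) j d <-> ElgR tau j d). { intros; apply ElgR_ext. intros; apply Hb; lia. }
    split; auto. rewrite Hb by auto. split. apply HE; auto. intros d Hd. rewrite HE. auto.
  - right. split; auto. rewrite Hb by auto. apply (proj2 (tau_spec j) Hn).
Qed.

Lemma tau_char : forall r d, tau r = d <-> exists c k, Corr c k r /\ bt c k r = d.
Proof.
  intros r d. split.
  - intros H. destruct (corr_complete r) as [c [k [H1 H2]]]. exists c, k. split; auto. lia.
  - intros [c [k [H1 H2]]]. rewrite <- H2. symmetry. apply (corr_sound c k r H1). lia.
Qed.

Section TauDef.
Variable X : nat -> Prop.
Hypothesis DA : D0 X (fun e => EA (e 0) (e 1)).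
Hypothesis DB : D0 X (fun e => EB (e 0) (e 1)).

Lemma D0_NSA : D0 X (fun e => NSA (e 0)).
Proof. unfold NSA. apply D0_and. apply D0_rep; auto. apply D0_not. apply D0_In. Qed.
Lemma D0_NSB : D0 X (fun e => NSB (e 0)).
Proof. unfold NSB. apply D0_and. apply D0_rep; auto. apply D0_not. apply D0_In. Qed.

Lemma Pg_ElgC : Pg X 2 (fun e => ElgR (bt (e 0) (e 1)) (e 2) (e 3)).
Proof.
  unfold ElgR. apply Pg_and; [|apply Pg_and].
  - apply D0_Pg. apply (D0_t1 X NSB (tvar 3)). apply D0_NSB.
  - apply (Pg_t2 X 2 (DomR EA EB) (tvar 2) (tvar 3)). apply Pg_Dom; auto.
  - apply Pg_ext with (Ball (tvar 2) (fun e => ~ NSA (e 0) \/ ~ bt (e 1) (e 2) (e 0) = e 4)).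
    + intros e. unfold Ball. simpl. split; intros H r' Hr'; specialize (H r' Hr'); tauto.
    + apply D0_Pg. apply D0_ball. apply D0_or. apply D0_not. apply D0_NSA.
      apply D0_not. apply (D0_t4 X (fun c d i r => bt c d i = r) (tvar 1) (tvar 2) (tvar 0) (tvar 4)). apply D0_bt.
Qed.

Lemma Sg_letbt : forall n P a b i, Sg X (S n) P ->
  Sg X (S n) (fun e => P (scons (bt (teval e a) (teval e b) (teval e i)) e)).
Proof.
  intros n P a b i HP.
  apply Sg_ext with (Ex1 (fun e => bt (teval e (lft a)) (teval e (lft b)) (teval e (lft i)) = teval e (tvar 0) /\ P e)).
  - intros e. unfold Ex1. split.
    + intros [v [H1 H2]]. rewrite !teval_lft in H1. simpl in H1. subst v. exact H2.
    + intros H. exists (bt (teval e a) (teval e b) (teval e i)). rewrite !teval_lft. simpl. auto.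
  - apply (Sg_ex X n). apply Sg_and; auto. apply D0_Sg.
    apply (D0_t4 X (fun c d i r => bt c d i = r)). apply D0_bt.
Qed.

Lemma Sg_Corr : Sg X 3 (fun e => Corr (e 0) (e 1) (e 2)).
Proof.
  unfold Corr.
  apply Sg_ext with (Ball (tsucc (tvar 2)) (fun e =>
     (NSA (e 0) /\ (fun e => ElgR (bt (e 2) (e 3)) (e 1) (e 0) /\
          Ball (tvar 0) (fun e => ~ ElgR (bt (e 3) (e 4)) (e 2) (e 0)) e)
        (scons (bt (teval e (tvar 1)) (teval e (tvar 2)) (teval e (tvar 0))) e)) \/
     (~ NSA (e 0) /\ bt (e 1) (e 2) (e 0) = 0))).
  - intros e. unfold Ball. simpl. split; intros H j Hj; specialize (H j Hj); exact H.
  - apply Sg_ball. apply Sg_or; apply Sg_and.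
    + apply D0_Sg. apply D0_NSA.
    + apply (Sg_letbt 2 (fun e => ElgR (bt (e 2) (e 3)) (e 1) (e 0) /\
          Ball (tvar 0) (fun e => ~ ElgR (bt (e 3) (e 4)) (e 2) (e 0)) e)).
      apply Sg_and.
      * apply Pg_Sg. apply (Pg_t4 X 2 (fun c k j d => ElgR (bt c k) j d) (tvar 2) (tvar 3) (tvar 1) (tvar 0)).
        apply Pg_ElgC.
      * apply Sg_mono. apply Sg_ball. apply (Pg_neg X 2 (fun e => ElgR (bt (e 3) (e 4)) (e 2) (e 0))).
        apply (Pg_t4 X 2 (fun c k j d => ElgR (bt c k) j d) (tvar 3) (tvar 4) (tvar 2) (tvar 0)).
        apply Pg_ElgC.
    + apply D0_Sg. apply D0_not. apply D0_NSA.
    + apply D0_Sg. apply (D0_t4 X (fun c d i r => bt c d i = r) (tvar 1) (tvar 2) (tvar 0) tzero). apply D0_bt.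
Qed.

Lemma Sg_tau : Sg X 3 (fun e => tau (e 0) = e 1).
Proof.
  apply Sg_ext with (Ex1 (Ex1 (fun e => Corr (e 1) (e 0) (e 2) /\ bt (e 1) (e 0) (e 2) = e 3))).
  - intros e. unfold Ex1. simpl. rewrite tau_char. split; intros [c [k H]]; exists c, k; auto.
  - apply (Sg_ex X 2 (Ex1 (fun e => Corr (e 1) (e 0) (e 2) /\ bt (e 1) (e 0) (e 2) = e 3))).
    apply (Sg_ex X 2 (fun e => Corr (e 1) (e 0) (e 2) /\ bt (e 1) (e 0) (e 2) = e 3)).
    apply Sg_and.
    + apply (Sg_t3 X 3 Corr (tvar 1) (tvar 0) (tvar 2)). apply Sg_Corr.
    + apply D0_Sg. apply (D0_t4 X (fun c d i r => bt c d i = r) (tvar 1) (tvar 0) (tvar 2) (tvar 3)). apply D0_bt.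
Qed.
End TauDef.
End Tau.
Section Emb.
Variables EA EB : nat -> nat -> Prop.
Hypothesis symA : forall x y, EA x y -> EA y x.
Hypothesis transA : forall x y z, EA x y -> EA y z -> EA x z.
Hypothesis symB : forall x y, EB x y -> EB y x.
Hypothesis transB : forall x y z, EB x y -> EB y z -> EB x z.
Variable RA : list nat.
Variable g : nat -> nat.
Hypothesis HRA1 : forall r, In r RA -> repE EA r /\ repE EB (g r) /\ DomR EA EB r (g r).
Hypothesis HRA2 : forall r r', In r RA -> In r' RA -> g r = g r' -> r = r'.
Hypothesis HRA3 : forall r, repE EA r -> ~ In r RA -> forall b, exists d, b < d /\ repE EB d /\ DomR EA EB r d.

Definition Target (r d : nat) := (In r RA /\ d = g r) \/ (NSA EA RA r /\ tau EA EB RA g r = d).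

Lemma Target_ex : forall r, repE EA r -> exists d, Target r d.
Proof.
  intros r Hr. destruct (classic (In r RA)).
  - exists (g r). left; auto.
  - exists (tau EA EB RA g r). right. split; auto. split; auto.
Qed.

Lemma Target_fun : forall r d d', Target r d -> Target r d' -> d = d'.
Proof.
  intros r d d' [[H1 H2]|[H1 H2]] [[H3 H4]|[H3 H4]]; subst; auto.
  destruct H3; contradiction. destruct H1; contradiction.
Qed.

Lemma Target_prop : forall r d, Target r d -> repE EB d /\ DomR EA EB r d.
Proof.
  intros r d [[H1 H2]|[H1 H2]]; subst.
  - destruct (HRA1 r H1) as [_ [H2 H3]]; auto.
  - destruct (proj1 (tau_spec EA EB RA g HRA3 r) H1) as [[[H2 _] [H3 _]] _]. auto.
Qed.

Lemma Target_inj : forall r r' d, Target r d -> Target r' d -> r = r'.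
Proof.
  intros r r' d [[H1 H2]|[H1 H2]] [[H3 H4]|[H3 H4]].
  - apply HRA2; auto. congruence.
  - subst. destruct (proj1 (tau_spec EA EB RA g HRA3 r') H3) as [[[_ Hn] _] _].
    exfalso. apply Hn. rewrite H4. apply in_map; auto.
  - subst. destruct (proj1 (tau_spec EA EB RA g HRA3 r) H1) as [[[_ Hn] _] _].
    exfalso. apply Hn. rewrite H4. apply in_map; auto.
  - destruct (lt_eq_lt_dec r r') as [[Hl|Hl]|Hl]; auto; exfalso.
    + destruct (proj1 (tau_spec EA EB RA g HRA3 r') H3) as [[_ [_ Hn]] _].
      apply (Hn r Hl H1). congruence.
    + destruct (proj1 (tau_spec EA EB RA g HRA3 r) H1) as [[_ [_ Hn]] _].
      apply (Hn r' Hl H3). congruence.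
Qed.

Definition Fspec (x y : nat) : Prop :=
  (EA x x /\ exists r n d, IsRepOf EA r x /\ rk EA x = n /\ Target r d /\ EB d y /\ rk EB y = n) \/
  (~ EA x x /\ y = 0).

Lemma Fspec_ex : forall x, exists y, Fspec x y.
Proof.
  intros x. destruct (classic (EA x x)) as [Hx|Hx]; [|exists 0; right; auto].
  destruct (IsRepOf_ex EA x Hx) as [r Hr].
  pose proof (IsRepOf_rep EA symA transA r x Hr) as Hrr.
  destruct (Target_ex r Hrr) as [d Hd].
  destruct (Target_prop r d Hd) as [Hd1 Hd2].
  destruct (Hd2 (rk EA x)) as [y [Hy1 Hy2]]. exists x. split; auto. destruct Hr; auto.
  exists y. left. split; auto. exists r, (rk EA x), d. auto.
Qed.

Lemma Fspec_fun : forall x y y', Fspec x y -> Fspec x y' -> y = y'.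
Proof.
  intros x y y' [[Hx [r [n [d [H1 [H2 [H3 [H4 H5]]]]]]]]|[Hx Hy]] [[Hx' [r' [n' [d' [H1' [H2' [H3' [H4' H5']]]]]]]]|[Hx' Hy']];
    try contradiction; try congruence.
  assert (r = r') by (eapply IsRepOf_unique; eauto). subst r'.
  assert (d = d') by (eapply Target_fun; eauto). subst d'.
  apply (rk_inj EB symB transB). eauto. congruence.
Qed.

Definition fE (x : nat) : nat := epsilon (inhabits 0) (Fspec x).

Lemma fE_spec : forall x, Fspec x (fE x).
Proof. intros. unfold fE. apply epsilon_spec. apply Fspec_ex. Qed.

Lemma fE_char : forall x y, fE x = y <-> Fspec x y.
Proof. intros. split. intros; subst; apply fE_spec. intros; eapply Fspec_fun; eauto. apply fE_spec. Qed.

Lemma fE_data : forall x, EA x x -> exists r d, IsRepOf EA r x /\ Target r d /\ EB d (fE x) /\ rk EB (fE x) = rk EA x.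
Proof.
  intros x Hx. destruct (fE_spec x) as [[_ [r [n [d [H1 [H2 [H3 [H4 H5]]]]]]]]|[Hn _]]; [|contradiction].
  exists r, d. subst. auto.
Qed.

Lemma fE_dom : forall x, EA x x -> EB (fE x) (fE x).
Proof. intros x Hx. destruct (fE_data x Hx) as [r [d [_ [_ [H _]]]]]. eauto. Qed.

Lemma fE_rel : forall x x', EA x x -> EA x' x' -> (EA x x' <-> EB (fE x) (fE x')).
Proof.
  intros x x' Hx Hx'. destruct (fE_data x Hx) as [r [d [H1 [H2 [H3 H4]]]]].
  destruct (fE_data x' Hx') as [r' [d' [H1' [H2' [H3' H4']]]]]. split.
  - intros Hxx'. assert (IsRepOf EA r x') by (eapply IsRepOf_class; eauto).
    assert (r = r') by (eapply IsRepOf_unique; eauto). subst r'.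
    assert (d = d') by (eapply Target_fun; eauto). subst d'. eauto.
  - intros Hyy'. assert (EB d d') by eauto.
    assert (d = d'). { apply (rep_unique EB); auto. apply (Target_prop r d H2). apply (Target_prop r' d' H2'). }
    subst d'. assert (r = r') by (eapply Target_inj; eauto). subst r'.
    destruct H1, H1'. eauto.
Qed.

Lemma fE_inj : forall x x', EA x x -> EA x' x' -> fE x = fE x' -> x = x'.
Proof.
  intros x x' Hx Hx' Heq. assert (EA x x'). { apply fE_rel; auto. rewrite Heq. apply fE_dom; auto. }
  apply (rk_inj EA symA transA); auto.
  destruct (fE_data x Hx) as [r [d [_ [_ [_ H4]]]]]. destruct (fE_data x' Hx') as [r' [d' [_ [_ [_ H4']]]]].
  rewrite <- H4, <- H4', Heq. auto.
Qed.

Section EmbDef.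
Variable X : nat -> Prop.
Hypothesis DA : D0 X (fun e => EA (e 0) (e 1)).
Hypothesis DB : D0 X (fun e => EB (e 0) (e 1)).

Lemma Sg_Target : Sg X 3 (fun e => Target (e 0) (e 1)).
Proof.
  unfold Target. apply Sg_or.
  - apply D0_Sg. apply D0_ext with (fun e => In (e 0, e 1) (map (fun r => (r, g r)) RA)).
    + intros e. rewrite in_map_iff. split.
      * intros [r [H1 H2]]. inversion H1; subst. auto.
      * intros [H1 H2]. exists (e 0). rewrite H2. auto.
    + apply D0_In2.
  - apply Sg_and. apply D0_Sg. apply D0_NSA; auto. apply Sg_tau; auto.
Qed.

Lemma Sg_Fspec : Sg X 3 (fun e => Fspec (e 0) (e 1)).
Proof.
  unfold Fspec. apply Sg_or; apply Sg_and.
  - apply D0_Sg. apply (D0_E X EA DA (tvar 0) (tvar 0)).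
  - apply Sg_ext with (Ex1 (Ex1 (Ex1 (fun e => IsRepOf EA (e 2) (e 3) /\ rk EA (e 3) = e 1 /\
        Target (e 2) (e 0) /\ EB (e 0) (e 4) /\ rk EB (e 4) = e 1)))).
    + intros e. unfold Ex1. simpl. tauto.
    + apply (Sg_ex X 2). apply (Sg_ex X 2). apply (Sg_ex X 2).
      apply Sg_and; [|apply Sg_and; [|apply Sg_and; [|apply Sg_and]]].
      * apply D0_Sg. apply (D0_t2 X (IsRepOf EA) (tvar 2) (tvar 3)). apply D0_IsRepOf; auto.
      * apply (Sg_le X 1). lia. apply (Sg_t2 X 1 (fun x n => rk EA x = n) (tvar 3) (tvar 1)). apply Sg_rk; auto.
      * apply (Sg_t2 X 3 Target (tvar 2) (tvar 0)). apply Sg_Target.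
      * apply D0_Sg. apply (D0_E X EB DB (tvar 0) (tvar 4)).
      * apply (Sg_le X 1). lia. apply (Sg_t2 X 1 (fun x n => rk EB x = n) (tvar 4) (tvar 1)). apply Sg_rk; auto.
  - apply D0_Sg. apply D0_not. apply (D0_E X EA DA (tvar 0) (tvar 0)).
  - apply D0_Sg. apply (D0_eq X (tvar 1) tzero).
Qed.

Lemma Sg_fE : Sg X 3 (fun e => fE (e 0) = e 1).
Proof. eapply Sg_ext; [|apply Sg_Fspec]. intros e. rewrite fE_char. tauto. Qed.

Lemma Sg_fE_neg : Sg X 3 (fun e => fE (e 0) <> e 1).
Proof.
  apply Sg_ext with (Ex1 (fun e => Fspec (e 1) (e 0) /\ ~ e 0 = e 2)).
  - intros e. unfold Ex1. simpl. split.
    + intros [y [H1 H2]]. rewrite <- fE_char in H1. congruence.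
    + intros H. exists (fE (e 0)). split; auto. apply fE_spec.
  - apply (Sg_ex X 2). apply Sg_and.
    + apply (Sg_t2 X 3 Fspec (tvar 1) (tvar 0)). apply Sg_Fspec.
    + apply D0_Sg. apply D0_not. apply (D0_eq X (tvar 0) (tvar 2)).
Qed.
End EmbDef.
End Emb.

Lemma main_emb : forall X (EA EB : nat -> nat -> Prop),
  (forall x y, EA x y -> EA y x) -> (forall x y z, EA x y -> EA y z -> EA x z) ->
  (forall x y, EB x y -> EB y x) -> (forall x y z, EB x y -> EB y z -> EB x z) ->
  D0 X (fun e => EA (e 0) (e 1)) -> D0 X (fun e => EB (e 0) (e 1)) ->
  forall h, (forall x, EA x x -> EB (h x) (h x)) ->
  (forall x y, EA x x -> EA y y -> h x = h y -> x = y) ->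
  (forall x y, EA x x -> EA y y -> (EA x y <-> EB (h x) (h y))) ->
  exists f, (forall x, EA x x -> EB (f x) (f x)) /\
    (forall x y, EA x x -> EA y y -> f x = f y -> x = y) /\
    (forall x y, EA x x -> EA y y -> (EA x y <-> EB (f x) (f y))) /\
    Sg X 3 (fun e => f (e 0) = e 1) /\ Sg X 3 (fun e => f (e 0) <> e 1).
Proof.
  intros X EA EB sA tA sB tB DA DB h H1 H2 H3.
  destruct (specials_exist EA EB sA tA sB tB h H1 H2 H3) as [RA [g [R1 [R2 R3]]]].
  exists (fE EA EB RA g). split; [|split; [|split; [|split]]].
  - apply fE_dom; auto.
  - apply fE_inj; auto.
  - apply fE_rel; auto.
  - apply Sg_fE; auto.
  - apply Sg_fE_neg; auto.
Qed.
Lemma tri_even : forall s, exists p, s * (s + 1) = 2 * p.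
Proof. induction s. exists 0; lia. destruct IHs as [p Hp]. exists (p + s + 1). nia. Qed.

Lemma cpair_eq : forall x y p, (x + y) * (x + y + 1) = 2 * p -> cpair x y = p + y.
Proof.
  intros x y p H. unfold cpair. rewrite H. rewrite Nat.mul_comm. rewrite Nat.div_mul by lia. reflexivity.
Qed.

Lemma cpair_inj : forall x y x' y', cpair x y = cpair x' y' -> x = x' /\ y = y'.
Proof.
  intros x y x' y' H.
  destruct (tri_even (x + y)) as [p Hp]. destruct (tri_even (x' + y')) as [p' Hp'].
  rewrite (cpair_eq _ _ _ Hp), (cpair_eq _ _ _ Hp') in H.
  destruct (lt_eq_lt_dec (x + y) (x' + y')) as [[Hl|Hl]|Hl].
  - exfalso. assert ((x + y + 1) * (x + y + 2) <= (x' + y') * (x' + y' + 1)).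
    apply Nat.mul_le_mono; lia. nia.
  - rewrite Hl in Hp. assert (p = p') by lia. subst. lia.
  - exfalso. assert ((x' + y' + 1) * (x' + y' + 2) <= (x + y) * (x + y + 1)).
    apply Nat.mul_le_mono; lia. nia.
Qed.

Section Oracle.
Variables S0 T0 : EqStr.
Definition XO := join (diagram S0) (diagram T0).

Lemma XO_S : forall x y, XO (2 * (2 * cpair x y + 1)) <-> rel S0 x y.
Proof.
  intros x y. unfold XO, join, diagram. split.
  - intros [[m [H1 [[z [H2 _]]|[x' [y' [H2 H3]]]]]]|[m [H1 _]]]; try lia.
    assert (cpair x y = cpair x' y') by lia. apply cpair_inj in H. destruct H; subst; auto.
  - intros H. left. exists (2 * cpair x y + 1). split; auto. right. exists x, y. auto.
Qed.

Lemma XO_T : forall x y, XO (2 * (2 * cpair x y + 1) + 1) <-> rel T0 x y.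
Proof.
  intros x y. unfold XO, join, diagram. split.
  - intros [[m [H1 _]]|[m [H1 [[z [H2 _]]|[x' [y' [H2 H3]]]]]]]; try lia.
    assert (cpair x y = cpair x' y') by lia. apply cpair_inj in H. destruct H; subst; auto.
  - intros H. right. exists (2 * cpair x y + 1). split; auto. right. exists x, y. auto.
Qed.

Definition two (t : term) : term := tadd t t.

Lemma D0_relS : D0 XO (fun e => rel S0 (e 0) (e 1)).
Proof.
  apply D0_ext with (Bex (tsucc (tmul (tadd (tvar 0) (tvar 1)) (tsucc (tadd (tvar 0) (tvar 1)))))
     (fun e => teval e (two (tvar 0)) = teval e (tmul (tadd (tvar 1) (tvar 2)) (tsucc (tadd (tvar 1) (tvar 2)))) /\
               XO (teval e (two (tsucc (two (tadd (tvar 0) (tvar 2)))))))).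
  - intros e. unfold Bex. simpl. split.
    + intros [p [_ [H1 H2]]]. rewrite <- XO_S. rewrite (cpair_eq (e 0) (e 1) p). 
      match goal with H: XO ?t |- XO ?u => replace u with t by lia; exact H end.
      rewrite Nat.add_1_r. lia.
    + intros H. destruct (tri_even (e 0 + e 1)) as [p Hp]. exists p. split.
      rewrite Nat.add_1_r in Hp. lia. split. rewrite Nat.add_1_r in Hp. lia.
      rewrite <- XO_S in H. rewrite (cpair_eq _ _ p Hp) in H.
      match goal with H: XO ?t |- XO ?u => replace u with t by lia; exact H end.
  - apply D0_bex. apply D0_and. apply D0_eq. apply D0_in.
Qed.

Lemma D0_relT : D0 XO (fun e => rel T0 (e 0) (e 1)).
Proof.
  apply D0_ext with (Bex (tsucc (tmul (tadd (tvar 0) (tvar 1)) (tsucc (tadd (tvar 0) (tvar 1)))))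
     (fun e => teval e (two (tvar 0)) = teval e (tmul (tadd (tvar 1) (tvar 2)) (tsucc (tadd (tvar 1) (tvar 2)))) /\
               XO (teval e (tsucc (two (tsucc (two (tadd (tvar 0) (tvar 2))))))))).
  - intros e. unfold Bex. simpl. split.
    + intros [p [_ [H1 H2]]]. rewrite <- XO_T. rewrite (cpair_eq (e 0) (e 1) p).
      match goal with H: XO ?t |- XO ?u => replace u with t by lia; exact H end.
      rewrite Nat.add_1_r. lia.
    + intros H. destruct (tri_even (e 0 + e 1)) as [p Hp]. exists p. split.
      rewrite Nat.add_1_r in Hp. lia. split. rewrite Nat.add_1_r in Hp. lia.
      rewrite <- XO_T in H. rewrite (cpair_eq _ _ p Hp) in H.
      match goal with H: XO ?t |- XO ?u => replace u with t by lia; exact H end.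
  - apply D0_bex. apply D0_and. apply D0_eq. apply D0_in.
Qed.
End Oracle.

Lemma Sg_Sigma_rel : forall n X (R : nat -> nat -> Prop), Sg X n (fun e => R (e 0) (e 1)) -> Sigma_rel n X R.
Proof. intros n X R [f [H1 H2]]. exists f. split; auto. intros x y. apply (H2 (env2 x y)). Qed.

Lemma eqs_facts : forall S, is_equivalence_structure S ->
  (forall x y, rel S x y -> rel S y x) /\ (forall x y z, rel S x y -> rel S y z -> rel S x z) /\
  (forall x, dom S x <-> rel S x x).
Proof.
  intros S [H1 [H2 [H3 H4]]]. split; auto. split; auto. intros x; split; auto. intros H. apply (H1 x x H).
Qed.

Lemma half_thm : forall S T, is_equivalence_structure S -> is_equivalence_structure T ->
  forall X, D0 X (fun e => rel S (e 0) (e 1)) -> D0 X (fun e => rel T (e 0) (e 1)) ->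
  (exists h, embedding S T h) -> exists f, embedding S T f /\ Delta_fun 3 X f.
Proof.
  intros S T HS HT X DS DT [h [Hh1 [Hh2 Hh3]]].
  destruct (eqs_facts S HS) as [sS [tS dS]]. destruct (eqs_facts T HT) as [sT [tT dT]].
  destruct (main_emb X (rel S) (rel T) sS tS sT tT DS DT h) as [f [F1 [F2 [F3 [F4 F5]]]]].
  - intros x Hx. apply dT. apply Hh1. apply dS; auto.
  - intros x y Hx Hy. apply Hh2; apply dS; auto.
  - intros x y Hx Hy. apply Hh3; apply dS; auto.
  - exists f. split; [split; [|split]|split].
    + intros x Hx. apply dT. apply F1. apply dS; auto.
    + intros x y Hx Hy. apply F2; apply dS; auto.
    + intros x y Hx Hy. apply F3; apply dS; auto.
    + apply Sg_Sigma_rel. auto.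
    + apply Sg_Sigma_rel. auto.
Qed.

Theorem theorem3p11 : forall S : EqStr,
  is_equivalence_structure S -> rel_Delta3_biemb_categorical S.
Proof.
  intros S HS T HT [[h Hh] [k Hk]].
  destruct (half_thm S T HS HT (XO S T) (D0_relS S T) (D0_relT S T) (ex_intro _ h Hh)) as [f [Hf1 Hf2]].
  destruct (half_thm T S HT HS (XO S T) (D0_relT S T) (D0_relS S T) (ex_intro _ k Hk)) as [g [Hg1 Hg2]].
  exists f, g. auto.
Qed.
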